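(* Let $\mu>1/2$, $0<\nu<1/2$, $g\in X$, and $f=F-(\mu-\nu)\theta$. Then: (1) there is a constant $c(\mu,\nu)$ depending only on $\mu,\nu$ such that $$|f(x)|\le c(\mu,\nu)e^{4\|g\|_\infty}|x|^{1-2\mu}+(\mu-\nu)|x|^{-1}\quad(|x|\ge1),\qquad |f(x)|\le 2(\mu-\nu)\pi\quad(x\in\mathbb{R}),$$ $$|f'(x)|\le c(\mu,\nu)e^{4\|g\|_\infty}\frac{1}{|x|^{2\nu}(x^2+1)^{\mu-\nu}}+(\mu-\nu)\frac1{x^2+1}\quad(x\ne0);$$ (2) if $\|g\|_\infty\le M$, then there is a constant $c(\mu,\nu,M)$ depending only on $\mu,\nu,M$ such that $$|T[g](x)|\le c(\mu,\nu,M)\big(|x|^{1/2-\mu}+|x|^{-1/2}\big)\quad\text{for }|x|\ge4.$$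
   Context: $X=\{g\in C(\mathbb{R})\cap L^\infty(\mathbb{R})\text{ real}:\ \lim_{x\to\pm\infty}g(x)=0\}$ with sup norm. $\theta:\mathbb{R}\to\mathbb{R}$ is the continuous branch of $\arg(x-i)$ in $(-\pi,0)$: $\theta(x)=\arctan(-1/x)$ for $x>0$, $\theta(0)=-\pi/2$, $\theta(x)=\arctan(-1/x)-\pi$ for $x<0$. For $g\in X$: $h^{-1}(0)=0$, $(h^{-1})'(x)=|x|^{\nu-1}(x^2+1)^{(\mu-\nu)/2}e^{g(x)}$; $\kappa>0$ with $\int_{\mathbb{R}}\frac{\kappa}{x h^{-1}(x)(h^{-1})'(x)}dx=(\mu-\nu)\pi$; $F$ continuous with $F'(x)=\frac{\kappa}{xh^{-1}(x)(h^{-1})'(x)}$ ($x\neq0$) and $F(+\infty)=0$ (so $F(-\infty)=-(\mu-\nu)\pi$); $T[g]=H(F-(\mu-\nu)\theta)$ with $H$ the Hilbert transform $Hf(x)=\frac1\pi\mathrm{p.v.}\int\frac{f(y)}{x-y}dy$. *)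

(* Defs.v *)
From Stdlib Require Import Reals Lra.
Open Scope R_scope.

Definition lim_pinf (f : R -> R) (l : R) : Prop :=
  forall eps, 0 < eps -> exists M, forall x, M < x -> Rabs (f x - l) < eps.
Definition lim_minf (f : R -> R) (l : R) : Prop :=
  forall eps, 0 < eps -> exists M, forall x, x < M -> Rabs (f x - l) < eps.

Definition inX (g : R -> R) : Prop :=
  continuity g /\ (exists B, forall x, Rabs (g x) <= B) /\
  lim_pinf g 0 /\ lim_minf g 0.

(* theta : continuous branch of arg(x - i) in (-pi, 0) *)
Definition theta (x : R) : R :=
  if Rlt_dec 0 x then atan (- / x)
  else if Req_EM_T x 0 then - (PI / 2)
  else atan (- / x) - PI.

(* (h^{-1})'(x) = |x|^(nu-1) (x^2+1)^((mu-nu)/2) e^{g(x)}, for x <> 0 *)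
Definition hinvD (mu nu : R) (g : R -> R) (x : R) : R :=
  Rpower (Rabs x) (nu - 1) * Rpower (x ^ 2 + 1) ((mu - nu) / 2) * exp (g x).

Definition setup (mu nu : R) (g hinv : R -> R) (kappa : R) (F : R -> R) : Prop :=
  inX g /\
  continuity hinv /\ hinv 0 = 0 /\
  (forall x, x <> 0 -> derivable_pt_lim hinv x (hinvD mu nu g x)) /\
  0 < kappa /\
  continuity F /\
  (forall x, x <> 0 ->
     derivable_pt_lim F x (kappa / (x * hinv x * hinvD mu nu g x))) /\
  lim_pinf F 0 /\
  lim_minf F (- ((mu - nu) * PI)).

Definition fF (mu nu : R) (F : R -> R) (x : R) : R := F x - (mu - nu) * theta x.

Definition pv_trunc (f : R -> R) (x e Rr v : R) : Prop :=
  exists (pr1 : Riemann_integrable (fun y => f y / (x - y)) (x - Rr) (x - e))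
         (pr2 : Riemann_integrable (fun y => f y / (x - y)) (x + e) (x + Rr)),
    v = RiemannInt pr1 + RiemannInt pr2.

Definition hilbert_at (f : R -> R) (x L : R) : Prop :=
  forall eps, 0 < eps -> exists d M, 0 < d /\
    forall e Rr, 0 < e < d -> M < Rr ->
      exists v, pv_trunc f x e Rr v /\ Rabs (v / PI - L) < eps.

(* Main.v *)
Require Import Defs.
From Stdlib Require Import Reals Lra Lia ZArith FunctionalExtensionality.
From Coquelicot Require Import Coquelicot.
Open Scope R_scope.

Lemma mono_gen (h dh : R -> R) a b : a <= b ->
  (forall t, a <= t <= b -> continuity_pt h t) ->
  (forall t, a < t < b -> derivable_pt_lim h t (dh t)) ->
  (forall t, a < t < b -> 0 <= dh t) -> h a <= h b.
Proof.
intros Hab Hc Hd Hp.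
destruct (Req_dec a b) as [->|Hne]; [lra|].
set (df := fun t => if Rle_dec t a then 0 else if Rle_dec b t then 0 else dh t).
destruct (MVT_gen h a b df) as [c [Hc1 Hc2]].
- intros t Ht. rewrite Rmin_left in Ht by lra. rewrite Rmax_right in Ht by lra.
  unfold df. destruct (Rle_dec t a); [lra|]. destruct (Rle_dec b t); [lra|].
  apply is_derive_Reals. apply Hd; lra.
- intros t Ht. rewrite Rmin_left in Ht by lra. rewrite Rmax_right in Ht by lra. apply Hc; lra.
- rewrite Rmin_left in Hc1 by lra. rewrite Rmax_right in Hc1 by lra.
  assert (0 <= df c).
  { unfold df. destruct (Rle_dec c a); [lra|]. destruct (Rle_dec b c); [lra|]. apply Hp; lra. }
  assert (0 <= df c * (b - a)) by (apply Rmult_le_pos; lra). lra.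
Qed.

Lemma theta_eq x : theta x = atan x - PI / 2.
Proof.
unfold theta. destruct (Rlt_dec 0 x).
- rewrite atan_opp, atan_inv by lra. lra.
- destruct (Req_EM_T x 0).
  + subst. rewrite atan_0. lra.
  + assert (Hx : / x = - / (- x)).
    { field. lra. }
    rewrite Hx, Ropp_involutive, atan_inv by lra. rewrite atan_opp. lra.
Qed.

Lemma atan_le_id z : 0 <= z -> atan z <= z.
Proof.
intros Hz.
assert (H := mono_gen (fun t => t - atan t) (fun t => 1 - / (1 + t^2)) 0 z Hz).
cut (0 - atan 0 <= z - atan z). rewrite atan_0; lra.
apply H.
- intros t _. apply continuity_pt_minus. apply continuity_pt_id.
  apply derivable_continuous_pt. exists (/ (1 + t^2)). apply derivable_pt_lim_atan.
- intros t _. apply derivable_pt_lim_minus. apply derivable_pt_lim_id. apply derivable_pt_lim_atan.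
- intros t _. assert (1 <= 1 + t^2) by nra.
  assert (/ (1 + t^2) <= 1). { rewrite <- Rinv_1. apply Rinv_le_contravar; lra. } lra.
Qed.

Lemma atan_pos z : 0 < z -> 0 < atan z.
Proof. intros. rewrite <- atan_0. apply atan_increasing. lra. Qed.

Lemma nat_ge r : exists N : nat, r <= INR N.
Proof.
destruct (archimed (Rabs r)) as [HN _].
assert (0 <= IZR (up (Rabs r))) by (pose proof (Rabs_pos r); lra).
exists (Z.to_nat (up (Rabs r))). rewrite INR_IZR_INZ, Z2Nat.id.
- pose proof (Rle_abs r); lra.
- apply le_IZR. lra.
Qed.

Lemma lim_fun (phi tau : R -> R) (A : R) :
  (forall a b, A <= a -> a <= b -> Rabs (phi a - phi b) <= tau a) ->
  (forall eps, 0 < eps -> exists B, forall a, B <= a -> tau a < eps) ->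
  exists L, forall a, A <= a -> Rabs (phi a - L) <= tau a.
Proof.
intros H1 H2.
set (u := fun n : nat => phi (A + INR n)).
assert (Hc : Cauchy_crit u).
{ intros eps Heps. destruct (H2 eps Heps) as [B HB].
  destruct (nat_ge (B - A)) as [N HN].
  exists N. intros n m Hn Hm.
  apply le_INR in Hn. apply le_INR in Hm.
  unfold R_dist, u.
  destruct (Nat.le_ge_cases n m) as [Hnm|Hnm]; apply le_INR in Hnm.
  - apply Rle_lt_trans with (tau (A + INR n)).
    + apply H1. pose proof (pos_INR n); lra. lra.
    + apply HB. lra.
  - rewrite Rabs_minus_sym. apply Rle_lt_trans with (tau (A + INR m)).
    + apply H1. pose proof (pos_INR m); lra. lra.
    + apply HB. lra. }
destruct (Rcomplete.R_complete u Hc) as [L HL].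
exists L. intros a Ha. apply le_epsilon. intros d Hd.
destruct (HL d Hd) as [N1 HN1].
destruct (nat_ge (a - A)) as [N2 HN2].
set (n := Nat.max N1 N2).
assert (Hn1 : (n >= N1)%nat) by lia.
assert (Hn2 : INR N2 <= INR n) by (apply le_INR; lia).
specialize (HN1 n Hn1). unfold R_dist, u in HN1.
assert (Rabs (phi a - phi (A + INR n)) <= tau a) by (apply H1; lra).
replace (phi a - L) with ((phi a - phi (A + INR n)) + (phi (A + INR n) - L)) by ring.
eapply Rle_trans. apply Rabs_triang. lra.
Qed.

Lemma exp_le a b : a <= b -> exp a <= exp b.
Proof. intros [H|H]. left; apply exp_increasing; auto. subst; lra. Qed.

Lemma abs_le_inv a b : Rabs a <= b -> -b <= a <= b.
Proof. intros H. pose proof (Rle_abs a). pose proof (Rle_abs (-a)). rewrite Rabs_Ropp in *. lra. Qed.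

Lemma Rpower_pos x y : 0 < Rpower x y.
Proof. unfold Rpower. apply exp_pos. Qed.

Lemma Rpower_m1 t a : 0 < t -> Rpower t (a - 1) = Rpower t a / t.
Proof.
intros Ht. unfold Rpower. replace ((a-1)*ln t) with (a * ln t + - ln t) by ring.
rewrite exp_plus, exp_Ropp, exp_ln by auto. reflexivity.
Qed.

Definition Gf mu nu t := Rpower t nu * Rpower (t^2+1) ((mu-nu)/2).

Lemma Gf_deriv mu nu t : 0 < t -> derivable_pt_lim (Gf mu nu) t
  (nu * Rpower t nu / t * Rpower (t^2+1) ((mu-nu)/2) + Rpower t nu * ((mu-nu)/2 * Rpower (t^2+1) ((mu-nu)/2) / (t^2+1) * (2*t))).
Proof.
intros. apply is_derive_Reals. unfold Gf, Rpower. auto_derive.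
- repeat split; nra.
- replace (t*(t*1)+1) with (t^2+1) by ring. field. split; nra.
Qed.

Lemma hinvD_pos t mu nu g : 0 < t ->
  hinvD mu nu g t = Rpower t nu / t * Rpower (t^2+1) ((mu-nu)/2) * exp (g t).
Proof. intros. unfold hinvD. rewrite Rabs_pos_eq by lra. rewrite Rpower_m1 by lra. reflexivity. Qed.

Lemma hinvD_gt0 t mu nu g : 0 < hinvD mu nu g t.
Proof. unfold hinvD. pose proof (Rpower_pos (Rabs t) (nu-1)). pose proof (Rpower_pos (t^2+1) ((mu-nu)/2)).
pose proof (exp_pos (g t)). apply Rmult_lt_0_compat; [apply Rmult_lt_0_compat|]; lra. Qed.

Lemma cont_of_deriv h t l : derivable_pt_lim h t l -> continuity_pt h t.
Proof. intros H. apply derivable_continuous_pt. exists l. exact H. Qed.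

Lemma h_nonneg mu nu g h : continuity_pt h 0 -> h 0 = 0 ->
  (forall t, 0 < t -> derivable_pt_lim h t (hinvD mu nu g t)) -> forall x, 0 <= x -> 0 <= h x.
Proof.
intros Hc H0 Hd x Hx. rewrite <- H0.
apply (mono_gen h (hinvD mu nu g)); auto.
- intros t Ht. destruct (Req_dec t 0) as [->|]; auto. apply (cont_of_deriv _ _ _ (Hd t ltac:(lra))).
- intros t Ht. apply Hd; lra.
- intros. left. apply hinvD_gt0.
Qed.

Lemma HL mu nu M g h : 0 < nu -> nu < mu -> (forall y, Rabs (g y) <= M) ->
  continuity_pt h 0 -> h 0 = 0 ->
  (forall t, 0 < t -> derivable_pt_lim h t (hinvD mu nu g t)) ->
  forall x, 0 < x -> exp (-M) / mu * Gf mu nu x <= h x.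
Proof.
intros Hnu Hmu Hg Hc H0 Hd x Hx.
set (p := (mu-nu)/2). set (k := exp (-M) / mu).
assert (Hk : 0 < k) by (unfold k; apply Rdiv_lt_0_compat; [apply exp_pos|lra]).
assert (Hcmp : forall e, 0 < e < x -> h e - k * Gf mu nu e <= h x - k * Gf mu nu x).
{ intros e He.
  apply (mono_gen (fun t => h t - k * Gf mu nu t)
    (fun t => hinvD mu nu g t - k * (nu * Rpower t nu / t * Rpower (t^2+1) p + Rpower t nu * (p * Rpower (t^2+1) p / (t^2+1) * (2*t))))).
  - lra.
  - intros t Ht. apply continuity_pt_minus.
    + apply (cont_of_deriv _ _ _ (Hd t ltac:(lra))).
    + apply continuity_pt_scal. apply (cont_of_deriv _ _ _ (Gf_deriv mu nu t ltac:(lra))).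
  - intros t Ht. apply derivable_pt_lim_minus. apply Hd; lra.
    apply derivable_pt_lim_scal. apply Gf_deriv; lra.
  - intros t Ht. rewrite hinvD_pos by lra. fold p.
    set (a := Rpower t nu). set (b := Rpower (t^2+1) p).
    assert (0 < a) by apply Rpower_pos. assert (0 < b) by apply Rpower_pos.
    assert (exp (-M) <= exp (g t)).
    { apply exp_le. specialize (Hg t). apply abs_le_inv in Hg. lra. }
    assert (Hkey : nu * a / t * b + a * (p * b / (t ^ 2 + 1) * (2 * t)) <= mu * (a / t * b)).
    { unfold p.
      assert (Ht2 : 0 < t^2+1) by nra.
      assert (E : nu * a / t * b + a * ((mu - nu) / 2 * b / (t ^ 2 + 1) * (2 * t)) =
               (a / t * b) * (nu + (mu-nu) * (t^2 / (t^2+1)))) by (field; lra).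
      rewrite E. rewrite (Rmult_comm mu).
      apply Rmult_le_compat_l. apply Rmult_le_pos; [|lra]. apply Rlt_le, Rdiv_lt_0_compat; lra.
      assert (t^2 / (t^2+1) <= 1). { apply Rle_div_l; lra. } nra. }
    assert (0 < a / t * b) by (apply Rmult_lt_0_compat; [apply Rdiv_lt_0_compat|]; lra).
    unfold k in *.
    assert (exp (-M) / mu * (nu * a / t * b + a * (p * b / (t ^ 2 + 1) * (2 * t))) <= exp (-M) * (a / t * b)).
    { apply Rle_trans with (exp (-M) / mu * (mu * (a / t * b))).
      apply Rmult_le_compat_l. apply Rlt_le, Rdiv_lt_0_compat; [apply exp_pos|lra]. auto.
      right. field. lra. }
    assert (exp (-M) * (a / t * b) <= a / t * b * exp (g t)) by nra.
    lra. }
assert (Hhe : forall e, 0 < e -> 0 <= h e).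
{ intros e He. apply (h_nonneg mu nu g h Hc H0 Hd). lra. }
apply Rnot_lt_le. intros Hlt.
set (d := k * Gf mu nu x - h x).
assert (Hd0 : 0 < d) by (unfold d; lra).
set (q := Rmin 1 (d / (2 * k * Rpower 2 p))).
assert (H2p : 0 < Rpower 2 p) by apply Rpower_pos.
assert (Hq : 0 < q). { unfold q. apply Rmin_glb_lt. lra. apply Rdiv_lt_0_compat. lra. nra. }
assert (Hq1 : q <= 1) by (unfold q; apply Rmin_l).
set (e := Rmin (x/2) (Rpower q (/nu))).
assert (He0 : 0 < e). { unfold e. apply Rmin_glb_lt. lra. apply Rpower_pos. }
assert (Hex : e < x). { unfold e. eapply Rle_lt_trans. apply Rmin_l. lra. }
assert (He1 : e <= 1).
{ unfold e. eapply Rle_trans. apply Rmin_r. unfold Rpower. rewrite <- exp_0. apply exp_le.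
  assert (ln q <= 0). { rewrite <- ln_1. apply ln_le; lra. }
  assert (0 < / nu) by (apply Rinv_0_lt_compat; lra). nra. }
assert (Hen : Rpower e nu <= q).
{ apply Rle_trans with (Rpower (Rpower q (/nu)) nu).
  - apply Rle_Rpower_l. lra. split. lra. unfold e. apply Rmin_r.
  - rewrite Rpower_mult. replace (/nu * nu) with 1 by (field; lra). rewrite Rpower_1 by lra. lra. }
assert (Hep : Rpower (e^2+1) p <= Rpower 2 p).
{ apply Rle_Rpower_l. unfold p; lra. split. nra. nra. }
assert (HG : k * Gf mu nu e <= k * (q * Rpower 2 p)).
{ apply Rmult_le_compat_l. lra. unfold Gf. fold p. apply Rmult_le_compat; try lra.
  apply Rlt_le, Rpower_pos. apply Rlt_le, Rpower_pos. }
assert (k * (q * Rpower 2 p) <= d / 2).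
{ apply Rle_trans with (k * ((d / (2 * k * Rpower 2 p)) * Rpower 2 p)).
  apply Rmult_le_compat_l. lra. apply Rmult_le_compat_r. lra. unfold q; apply Rmin_r.
  right. field. split; lra. }
specialize (Hcmp e (conj He0 Hex)). specialize (Hhe e He0). unfold d in *. lra.
Qed.

Lemma HU mu nu M g h : 0 < nu -> nu < mu -> (forall y, Rabs (g y) <= M) ->
  continuity_pt h 0 -> h 0 = 0 ->
  (forall t, 0 < t -> derivable_pt_lim h t (hinvD mu nu g t)) ->
  forall x, 0 < x <= 2 -> h x <= exp M * Rpower 5 ((mu-nu)/2) * Rpower x nu / nu.
Proof.
intros Hnu Hmu Hg Hc H0 Hd x Hx.
set (p := (mu-nu)/2). set (k := exp M * Rpower 5 p).
assert (Hk : 0 < k) by (unfold k; apply Rmult_lt_0_compat; [apply exp_pos|apply Rpower_pos]).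
assert (Hcmp : forall e, 0 < e < x -> k * Rpower e nu / nu - h e <= k * Rpower x nu / nu - h x).
{ intros e He.
  apply (mono_gen (fun t => k * Rpower t nu / nu - h t)
    (fun t => k * (Rpower t nu / t) - hinvD mu nu g t)).
  - lra.
  - intros t Ht. apply continuity_pt_minus.
    + unfold Rdiv. apply continuity_pt_mult. apply continuity_pt_scal.
      apply (cont_of_deriv _ _ _ (derivable_pt_lim_power t nu ltac:(lra))).
      apply continuity_pt_const. intros a b; reflexivity.
    + apply (cont_of_deriv _ _ _ (Hd t ltac:(lra))).
  - intros t Ht. apply derivable_pt_lim_minus; [|apply Hd; lra].
    apply is_derive_Reals. unfold Rpower. auto_derive. lra. field. lra.
  - intros t Ht. rewrite hinvD_pos by lra. fold p.
    set (a := Rpower t nu). set (b := Rpower (t^2+1) p).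
    assert (0 < a) by apply Rpower_pos. assert (0 < b) by apply Rpower_pos.
    assert (exp (g t) <= exp M).
    { apply exp_le. specialize (Hg t). apply abs_le_inv in Hg. lra. }
    assert (b <= Rpower 5 p). { apply Rle_Rpower_l. unfold p; lra. split; nra. }
    assert (0 < a / t) by (apply Rdiv_lt_0_compat; lra).
    replace (k * (a / t)) with (a / t * (exp M * Rpower 5 p)) by (unfold k; field; lra).
    assert (b * exp (g t) <= Rpower 5 p * exp M) by (pose proof (exp_pos (g t)); apply Rmult_le_compat; lra).
    assert (a / t * b * exp (g t) <= a / t * (exp M * Rpower 5 p)) by (rewrite Rmult_assoc, (Rmult_comm (exp M)); apply Rmult_le_compat_l; lra).
    lra. }
apply Rnot_lt_le. intros Hlt.
set (d := h x - k * Rpower x nu / nu).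
assert (Hd0 : 0 < d) by (unfold d, k, p in *; lra).
destruct (Hc d Hd0) as [al [Hal Hal2]].
set (e := Rmin (x/2) (al/2)).
assert (He0 : 0 < e) by (unfold e; apply Rmin_glb_lt; lra).
assert (Hex : e < x) by (unfold e; eapply Rle_lt_trans; [apply Rmin_l|lra]).
assert (Hea : e < al) by (unfold e; eapply Rle_lt_trans; [apply Rmin_r|lra]).
specialize (Hal2 e). simpl in Hal2. unfold R_dist in Hal2. rewrite H0 in Hal2.
assert (Habs : Rabs (h e - 0) < d).
{ apply Hal2. split. unfold D_x, no_cond. split; auto. lra. rewrite Rminus_0_r, Rabs_pos_eq; lra. }
rewrite Rminus_0_r in Habs. pose proof (Rle_abs (h e)).
specialize (Hcmp e (conj He0 Hex)).
assert (0 <= k * Rpower e nu / nu).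
{ apply Rmult_le_pos. apply Rmult_le_pos. lra. apply Rlt_le, Rpower_pos. apply Rlt_le, Rinv_0_lt_compat. lra. }
unfold d, k, p in *. lra.
Qed.

Lemma refl_deriv mu nu g hinv t :
  derivable_pt_lim hinv (-t) (hinvD mu nu g (-t)) ->
  derivable_pt_lim (fun t => - hinv (-t)) t (hinvD mu nu (fun y => g (-y)) t).
Proof.
intros Hd. apply is_derive_Reals.
assert (E : hinvD mu nu (fun y => g (-y)) t = - (scal (-1) (hinvD mu nu g (-t)))).
{ unfold hinvD. rewrite Rabs_Ropp. replace ((-t)^2) with (t^2) by ring. unfold scal; simpl. unfold mult; simpl. ring. }
rewrite E. apply (is_derive_opp (fun t => hinv (-t))).
apply (is_derive_comp hinv (fun t => -t)). apply is_derive_Reals. exact Hd.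
auto_derive; auto.
Qed.

Lemma hinv_lower mu nu g hinv kappa F M : 0 < nu -> nu < mu ->
  setup mu nu g hinv kappa F -> (forall y, Rabs (g y) <= M) ->
  forall x, x <> 0 -> exp (-M) / mu * (Rabs x * Gf mu nu (Rabs x)) <= x * hinv x.
Proof.
intros Hnu Hmu Hs Hg x Hx.
destruct Hs as (_ & Hc & H0 & Hd & _).
destruct (Rlt_or_le 0 x) as [Hp|Hn].
- rewrite Rabs_pos_eq by lra.
  pose proof (HL mu nu M g hinv Hnu Hmu Hg (Hc 0) H0 (fun t _ => Hd t ltac:(lra)) x Hp).
  rewrite <- Rmult_assoc, (Rmult_comm _ x), Rmult_assoc. apply Rmult_le_compat_l; lra.
- rewrite Rabs_left by lra.
  assert (Hg' : forall y, Rabs (g (-y)) <= M) by auto.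
  assert (Hc' : continuity_pt (fun t => - hinv (-t)) 0).
  { apply continuity_pt_opp. apply (continuity_pt_comp (fun t => -t) hinv).
    apply continuity_pt_opp, continuity_pt_id. rewrite Ropp_0. apply Hc. }
  assert (H0' : - hinv (- 0) = 0) by (rewrite Ropp_0, H0; ring).
  assert (Hd' : forall t, 0 < t -> derivable_pt_lim (fun t => - hinv (-t)) t (hinvD mu nu (fun y => g (-y)) t)).
  { intros t Ht. apply refl_deriv. apply Hd. lra. }
  pose proof (HL mu nu M (fun y => g (-y)) (fun t => - hinv (-t)) Hnu Hmu Hg' Hc' H0' Hd' (-x) ltac:(lra)) as H.
  simpl in H. rewrite Ropp_involutive in H.
  replace (x * hinv x) with ((-x) * (- hinv x)) by ring.
  rewrite <- Rmult_assoc, (Rmult_comm _ (-x)), Rmult_assoc. apply Rmult_le_compat_l; lra.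
Qed.

Definition Fd mu nu g (hinv : R -> R) kappa x := kappa / (x * hinv x * hinvD mu nu g x).

Lemma Fd_bound mu nu g hinv kappa F M : 0 < nu -> nu < mu ->
  setup mu nu g hinv kappa F -> (forall y, Rabs (g y) <= M) ->
  forall x, x <> 0 -> 0 < Fd mu nu g hinv kappa x /\
    Fd mu nu g hinv kappa x <= kappa * mu * exp (2 * M) / (Rpower (Rabs x) (2 * nu) * Rpower (x^2+1) (mu - nu)).
Proof.
intros Hnu Hmu Hs Hg x Hx.
pose proof (hinv_lower mu nu g hinv kappa F M Hnu Hmu Hs Hg x Hx) as HA.
assert (Hk : 0 < kappa) by (destruct Hs as (_&_&_&_&Hk&_); exact Hk).
set (s := Rabs x) in *. assert (Hs0 : 0 < s) by (unfold s; apply Rabs_pos_lt; auto).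
set (p := (mu - nu) / 2).
set (a := Rpower s nu). set (b := Rpower (x^2+1) p).
assert (Ha : 0 < a) by apply Rpower_pos. assert (Hb : 0 < b) by apply Rpower_pos.
assert (HG : Gf mu nu s = a * b).
{ unfold Gf. fold p a. unfold b, s. rewrite pow2_abs. reflexivity. }
rewrite HG in HA.
assert (HB : hinvD mu nu g x = a / s * b * exp (g x)).
{ unfold hinvD. fold s. rewrite Rpower_m1 by lra. reflexivity. }
assert (HeM : exp (-M) <= exp (g x)) by (apply exp_le; specialize (Hg x); apply abs_le_inv in Hg; lra).
set (Q := exp (-M) / mu * (s * (a * b)) * (a / s * b * exp (-M))).
assert (HQ : 0 < Q).
{ unfold Q. pose proof (exp_pos (-M)).
  assert (0 < exp (-M) / mu) by (apply Rdiv_lt_0_compat; lra).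
  assert (0 < a / s) by (apply Rdiv_lt_0_compat; lra).
  assert (0 < s * (a * b)) by (apply Rmult_lt_0_compat; [lra|apply Rmult_lt_0_compat; lra]).
  assert (0 < a / s * b) by (apply Rmult_lt_0_compat; lra).
  apply Rmult_lt_0_compat; apply Rmult_lt_0_compat; lra. }
assert (HQ2 : Q <= x * hinv x * hinvD mu nu g x).
{ rewrite HB. unfold Q. apply Rmult_le_compat; try lra.
  - pose proof (exp_pos (-M)).
    assert (0 < exp (-M) / mu) by (apply Rdiv_lt_0_compat; lra).
    assert (0 < s * (a * b)) by (apply Rmult_lt_0_compat; [lra|apply Rmult_lt_0_compat; lra]).
    apply Rlt_le, Rmult_lt_0_compat; lra.
  - pose proof (exp_pos (-M)). assert (0 < a / s) by (apply Rdiv_lt_0_compat; lra).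
    assert (0 < a / s * b) by (apply Rmult_lt_0_compat; lra).
    apply Rlt_le, Rmult_lt_0_compat; lra.
  - assert (0 < a / s * b) by (apply Rmult_lt_0_compat; [apply Rdiv_lt_0_compat|]; lra).
    apply Rmult_le_compat_l; lra. }
assert (HQe : Q = exp (-(2*M)) / mu * (Rpower s (2 * nu) * Rpower (x^2+1) (mu-nu))).
{ replace (2 * nu) with (nu + nu) by ring. replace (mu - nu) with (p + p) by (unfold p; field).
  rewrite !Rpower_plus. fold a b. unfold Q.
  replace (-(2*M)) with (-M + -M) by ring. rewrite exp_plus. field. split; lra. }
unfold Fd. split.
- apply Rdiv_lt_0_compat; lra.
- apply Rle_trans with (kappa / Q).
  + apply Rmult_le_compat_l. lra. apply Rinv_le_contravar; lra.
  + rewrite HQe. right. replace (-(2*M)) with (- (2*M)) by ring. rewrite exp_Ropp.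
    pose proof (exp_pos (2*M)). pose proof (Rpower_pos s (2*nu)). pose proof (Rpower_pos (x^2+1) (mu-nu)).
    field. repeat split; lra.
Qed.

Lemma mono0 (h dh : R -> R) : continuity h ->
  (forall t, t <> 0 -> derivable_pt_lim h t (dh t)) -> (forall t, t <> 0 -> 0 <= dh t) ->
  forall a b, a <= b -> h a <= h b.
Proof.
intros Hc Hd Hp a b Hab.
assert (G : forall a b, a <= b -> (0 <= a \/ b <= 0) -> h a <= h b).
{ intros a' b' H1 H2. apply (mono_gen h dh); auto.
  intros t Ht. apply Hd. lra. intros t Ht. apply Hp. lra. }
destruct (Rle_or_lt 0 a). apply G; lra.
destruct (Rle_or_lt b 0). apply G; lra.
apply Rle_trans with (h 0); apply G; lra.
Qed.

Lemma F_mono mu nu g hinv kappa F M : 0 < nu -> nu < mu ->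
  setup mu nu g hinv kappa F -> (forall y, Rabs (g y) <= M) ->
  forall a b, a <= b -> F a <= F b.
Proof.
intros Hnu Hmu Hs Hg. pose proof Hs as Hs'.
destruct Hs' as (_&_&_&_&_&HFc&HFd&_).
apply (mono0 F (Fd mu nu g hinv kappa)); auto.
intros t Ht. left. apply (Fd_bound mu nu g hinv kappa F M); auto.
Qed.

Lemma F_range mu nu g hinv kappa F M : 0 < nu -> nu < mu ->
  setup mu nu g hinv kappa F -> (forall y, Rabs (g y) <= M) ->
  forall x, - ((mu - nu) * PI) <= F x <= 0.
Proof.
intros Hnu Hmu Hs Hg x. pose proof (F_mono mu nu g hinv kappa F M Hnu Hmu Hs Hg) as Hm.
destruct Hs as (_&_&_&_&_&_&_&Hp&Hn). split.
- apply Rnot_lt_le. intros Hlt.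
  destruct (Hn (- ((mu - nu) * PI) - F x) ltac:(lra)) as [B HB].
  set (y := Rmin x B - 1). specialize (HB y ltac:(unfold y; pose proof (Rmin_r x B); lra)).
  assert (F y <= F x) by (apply Hm; unfold y; pose proof (Rmin_l x B); lra).
  pose proof (Rle_abs (- (F y - - ((mu - nu) * PI)))) as HH. rewrite Rabs_Ropp in HH. lra.
- apply Rnot_lt_le. intros Hlt.
  destruct (Hp (F x) ltac:(lra)) as [B HB].
  set (y := Rmax x B + 1). specialize (HB y ltac:(unfold y; pose proof (Rmax_r x B); lra)).
  assert (F x <= F y) by (apply Hm; unfold y; pose proof (Rmax_l x B); lra).
  pose proof (Rle_abs (F y - 0)). lra.
Qed.

Definition Kk mu nu := (mu - nu) * PI * 2 * (Rpower 5 ((mu-nu)/2) * Rpower 2 nu / nu) * Rpower 5 ((mu-nu)/2).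

Lemma kappa_bound mu nu g hinv kappa F M : 0 < nu < 1 -> nu < mu ->
  setup mu nu g hinv kappa F -> (forall y, Rabs (g y) <= M) ->
  kappa <= Kk mu nu * exp (2 * M).
Proof.
intros Hnu Hmu Hs Hg.
pose proof (F_range mu nu g hinv kappa F M ltac:(lra) Hmu Hs Hg) as Hr.
pose proof Hs as Hs'. destruct Hs' as (_&Hc&H0&Hd&Hk&HFc&HFd&_).
destruct (MVT_gen F 1 2 (Fd mu nu g hinv kappa)) as [c [Hc1 Hc2]].
- intros t Ht. rewrite Rmin_left in Ht by lra. rewrite Rmax_right in Ht by lra.
  apply is_derive_Reals. apply HFd. lra.
- intros t _. apply HFc.
- rewrite Rmin_left in Hc1 by lra. rewrite Rmax_right in Hc1 by lra.
  set (p := (mu - nu)/2).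
  set (U := exp M * Rpower 5 p * Rpower 2 nu / nu).
  set (V := exp M * Rpower 5 p).
  assert (HU2 : hinv 2 <= U).
  { apply (HU mu nu M g hinv); try lra; auto. intros; apply Hd; lra. }
  assert (Hc2' : hinv c <= hinv 2).
  { apply (mono_gen hinv (hinvD mu nu g)). lra. intros; apply Hc.
    intros; apply Hd; lra. intros; left; apply hinvD_gt0. }
  assert (Hcp : 0 < c * hinv c).
  { eapply Rlt_le_trans. 2: apply (hinv_lower mu nu g hinv kappa F M); auto; lra.
    rewrite Rabs_pos_eq by lra. unfold Gf.
    pose proof (exp_pos (-M)). pose proof (Rpower_pos c nu). pose proof (Rpower_pos (c^2+1) ((mu-nu)/2)).
    apply Rmult_lt_0_compat. apply Rdiv_lt_0_compat; lra.
    apply Rmult_lt_0_compat. lra. apply Rmult_lt_0_compat; lra. }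
  assert (Hhc : 0 < hinv c) by nra.
  assert (HV : hinvD mu nu g c <= V).
  { unfold hinvD, V. rewrite Rabs_pos_eq by lra.
    assert (Rpower c (nu - 1) <= 1). { apply Rle_trans with (Rpower c 0). apply Rle_Rpower; lra. rewrite Rpower_O; lra. }
    assert (Rpower (c^2+1) ((mu-nu)/2) <= Rpower 5 p). { apply Rle_Rpower_l. unfold p; lra. split; nra. }
    assert (exp (g c) <= exp M). { apply exp_le. specialize (Hg c). apply abs_le_inv in Hg. lra. }
    pose proof (Rpower_pos c (nu-1)). pose proof (Rpower_pos (c^2+1) ((mu-nu)/2)). pose proof (exp_pos (g c)).
    pose proof (Rpower_pos 5 p). pose proof (exp_pos M).
    apply Rle_trans with (1 * Rpower 5 p * exp M).
    apply Rmult_le_compat. apply Rlt_le, Rmult_lt_0_compat; lra. lra.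
    apply Rmult_le_compat; lra. lra. lra. }
  assert (HD : 0 < hinvD mu nu g c) by apply hinvD_gt0.
  assert (Hprod : c * hinv c * hinvD mu nu g c <= 2 * U * V).
  { apply Rmult_le_compat; try lra. apply Rmult_le_compat; lra. }
  assert (HUV : 0 < 2 * U * V).
  { unfold U, V. pose proof (exp_pos M). pose proof (Rpower_pos 5 p). pose proof (Rpower_pos 2 nu).
    assert (0 < Rpower 2 nu / nu) by (apply Rdiv_lt_0_compat; lra).
    assert (0 < exp M * Rpower 5 p) by (apply Rmult_lt_0_compat; lra).
    unfold Rdiv. rewrite !Rmult_assoc. repeat apply Rmult_lt_0_compat; try lra.
    fold (Rdiv (Rpower 2 nu) nu). nra. }
  assert (Hfd : kappa / (2 * U * V) <= Fd mu nu g hinv kappa c).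
  { unfold Fd. apply Rmult_le_compat_l. lra. apply Rinv_le_contravar; nra. }
  pose proof (Hr 1). pose proof (Hr 2).
  assert (kappa / (2 * U * V) <= (mu - nu) * PI) by lra.
  assert (kappa <= (mu - nu) * PI * (2 * U * V)).
  { apply Rmult_le_reg_r with (/ (2 * U * V)). apply Rinv_0_lt_compat; lra.
    replace (kappa * / (2 * U * V)) with (kappa / (2 * U * V)) by reflexivity.
    replace ((mu - nu) * PI * (2 * U * V) * / (2 * U * V)) with ((mu - nu) * PI) by (field; lra). lra. }
  unfold Kk. fold p. replace (2 * M) with (M + M) by ring. rewrite exp_plus.
  unfold U, V in *. lra.
Qed.

Definition Den mu nu x := Rpower (Rabs x) (2 * nu) * Rpower (x^2+1) (mu - nu).

Lemma Den_pos mu nu x : 0 < Den mu nu x.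
Proof. unfold Den. apply Rmult_lt_0_compat; apply Rpower_pos. Qed.

Lemma Den_ge mu nu x : nu <= mu -> 1 <= Rabs x -> Rpower (Rabs x) (2 * mu) <= Den mu nu x.
Proof.
intros H1 H2. unfold Den.
assert (E : x^2 = Rpower (Rabs x) 2).
{ rewrite <- pow2_abs. replace 2 with (INR 2) by (simpl; ring). rewrite Rpower_pow by lra. reflexivity. }
apply Rle_trans with (Rpower (Rabs x) (2*nu) * Rpower (x^2) (mu-nu)).
- rewrite E, Rpower_mult, <- Rpower_plus. right. f_equal. ring.
- apply Rmult_le_compat_l. apply Rlt_le, Rpower_pos. apply Rle_Rpower_l. lra. split. rewrite <- pow2_abs. nra. lra.
Qed.

Lemma Kk_pos mu nu : 0 < nu -> nu < mu -> 0 < Kk mu nu.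
Proof.
intros. unfold Kk. pose proof PI_RGT_0. pose proof (Rpower_pos 5 ((mu-nu)/2)). pose proof (Rpower_pos 2 nu).
assert (0 < Rpower 2 nu / nu) by (apply Rdiv_lt_0_compat; lra).
assert (0 < Rpower 5 ((mu - nu) / 2) * Rpower 2 nu / nu).
{ unfold Rdiv. rewrite Rmult_assoc. apply Rmult_lt_0_compat; auto. }
assert (0 < (mu - nu) * PI) by (apply Rmult_lt_0_compat; lra).
apply Rmult_lt_0_compat; [apply Rmult_lt_0_compat; [apply Rmult_lt_0_compat; lra | auto] | auto].
Qed.

Definition Kc mu nu M := Kk mu nu * mu * exp (4 * M).

Lemma Fd_bound2 mu nu g hinv kappa F M : 0 < nu < 1 -> nu < mu ->
  setup mu nu g hinv kappa F -> (forall y, Rabs (g y) <= M) ->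
  forall x, x <> 0 -> 0 < Fd mu nu g hinv kappa x /\
    Fd mu nu g hinv kappa x <= Kc mu nu M / Den mu nu x.
Proof.
intros Hnu Hmu Hs Hg x Hx.
destruct (Fd_bound mu nu g hinv kappa F M ltac:(lra) Hmu Hs Hg x Hx) as [H1 H2].
split; auto. eapply Rle_trans. exact H2. fold (Den mu nu x).
pose proof (Den_pos mu nu x). pose proof (kappa_bound mu nu g hinv kappa F M Hnu Hmu Hs Hg).
unfold Kc. replace (4 * M) with (2*M + 2*M) by ring. rewrite exp_plus.
unfold Rdiv. apply Rmult_le_compat_r. apply Rlt_le, Rinv_0_lt_compat; auto.
pose proof (exp_pos (2*M)).
replace (Kk mu nu * mu * (exp (2 * M) * exp (2 * M))) with ((Kk mu nu * exp (2*M)) * (mu * exp (2*M))) by ring.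
rewrite (Rmult_assoc kappa).
apply Rmult_le_compat_r. apply Rlt_le, Rmult_lt_0_compat; lra. auto.
Qed.

Lemma Fd_bound3 mu nu g hinv kappa F M : 0 < nu < 1 -> nu < mu ->
  setup mu nu g hinv kappa F -> (forall y, Rabs (g y) <= M) ->
  forall x, 1 <= Rabs x -> Fd mu nu g hinv kappa x <= Kc mu nu M * Rpower (Rabs x) (- (2 * mu)).
Proof.
intros Hnu Hmu Hs Hg x Hx.
assert (Hx0 : x <> 0) by (intro; subst; rewrite Rabs_R0 in Hx; lra).
destruct (Fd_bound2 mu nu g hinv kappa F M Hnu Hmu Hs Hg x Hx0) as [H1 H2].
eapply Rle_trans. exact H2. rewrite Rpower_Ropp.
assert (HK : 0 <= Kc mu nu M).
{ unfold Kc. pose proof (Kk_pos mu nu ltac:(lra) Hmu). pose proof (exp_pos (4*M)).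
  apply Rlt_le. apply Rmult_lt_0_compat; [apply Rmult_lt_0_compat|]; lra. }
apply Rmult_le_compat_l. auto. apply Rinv_le_contravar. apply Rpower_pos. apply Den_ge; lra.
Qed.

Lemma Kc_pos mu nu M : 0 < nu -> nu < mu -> 0 < Kc mu nu M.
Proof. intros. unfold Kc. pose proof (Kk_pos mu nu H H0). pose proof (exp_pos (4*M)).
apply Rmult_lt_0_compat; [apply Rmult_lt_0_compat|]; lra. Qed.

Lemma tail_pos mu nu g hinv kappa F M : 1/2 < mu -> 0 < nu < 1 -> nu < mu ->
  setup mu nu g hinv kappa F -> (forall y, Rabs (g y) <= M) ->
  forall x, 1 <= x -> - F x <= Kc mu nu M / (2 * mu - 1) * Rpower x (1 - 2 * mu).
Proof.
intros Hmu2 Hnu Hmu Hs Hg x Hx.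
pose proof (Kc_pos mu nu M ltac:(lra) Hmu) as HK.
set (A := Kc mu nu M / (2 * mu - 1)).
assert (HA : 0 < A) by (unfold A; apply Rdiv_lt_0_compat; lra).
pose proof Hs as Hs'. destruct Hs' as (_&_&_&_&_&HFc&HFd&Hp&_).
assert (Hdec : forall y, x <= y -> F y + A * Rpower y (1 - 2*mu) <= F x + A * Rpower x (1 - 2*mu)).
{ intros y Hy.
  cut (- (F x + A * Rpower x (1 - 2*mu)) <= - (F y + A * Rpower y (1 - 2*mu))). lra.
  apply (mono_gen (fun t => - (F t + A * Rpower t (1 - 2*mu)))
           (fun t => - (Fd mu nu g hinv kappa t + A * ((1 - 2*mu) * Rpower t (1 - 2*mu - 1))))); auto.
  - intros t Ht. apply continuity_pt_opp. apply continuity_pt_plus. apply HFc.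
    apply continuity_pt_scal. apply (cont_of_deriv _ _ _ (derivable_pt_lim_power t (1-2*mu) ltac:(lra))).
  - intros t Ht. apply derivable_pt_lim_opp. apply derivable_pt_lim_plus. apply HFd. lra.
    apply derivable_pt_lim_scal. apply derivable_pt_lim_power. lra.
  - intros t Ht. replace (1 - 2*mu - 1) with (- (2*mu)) by ring.
    pose proof (Fd_bound3 mu nu g hinv kappa F M Hnu Hmu Hs Hg t) as HB.
    rewrite Rabs_pos_eq in HB by lra. specialize (HB ltac:(lra)).
    replace (A * ((1 - 2 * mu) * Rpower t (- (2 * mu)))) with (- (Kc mu nu M * Rpower t (- (2 * mu)))).
    lra. unfold A. field. lra. }
apply Rnot_lt_le. intros Hlt.
set (d := - F x - A * Rpower x (1 - 2*mu)).
destruct (Hp d ltac:(unfold d; lra)) as [B HB].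
set (y := Rmax x B + 1). specialize (HB y ltac:(unfold y; pose proof (Rmax_r x B); lra)).
specialize (Hdec y ltac:(unfold y; pose proof (Rmax_l x B); lra)).
pose proof (Rpower_pos y (1 - 2*mu)).
pose proof (Rle_abs (- (F y - 0))) as HH. rewrite Rabs_Ropp in HH.
assert (0 < A * Rpower y (1 - 2 * mu)) by (apply Rmult_lt_0_compat; lra).
unfold d in *. lra.
Qed.

Lemma tail_neg mu nu g hinv kappa F M : 1/2 < mu -> 0 < nu < 1 -> nu < mu ->
  setup mu nu g hinv kappa F -> (forall y, Rabs (g y) <= M) ->
  forall x, x <= -1 -> F x + (mu - nu) * PI <= Kc mu nu M / (2 * mu - 1) * Rpower (- x) (1 - 2 * mu).
Proof.
intros Hmu2 Hnu Hmu Hs Hg x Hx.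
pose proof (Kc_pos mu nu M ltac:(lra) Hmu) as HK.
set (A := Kc mu nu M / (2 * mu - 1)).
assert (HA : 0 < A) by (unfold A; apply Rdiv_lt_0_compat; lra).
pose proof Hs as Hs'. destruct Hs' as (_&_&_&_&_&HFc&HFd&_&Hn).
assert (Hdec : forall y, y <= x -> F x - A * Rpower (-x) (1 - 2*mu) <= F y - A * Rpower (-y) (1 - 2*mu)).
{ intros y Hy.
  cut (- (F y - A * Rpower (-y) (1 - 2*mu)) <= - (F x - A * Rpower (-x) (1 - 2*mu))). lra.
  apply (mono_gen (fun t => - (F t - A * Rpower (-t) (1 - 2*mu)))
           (fun t => - (Fd mu nu g hinv kappa t - A * ((1 - 2*mu) * Rpower (-t) (1 - 2*mu - 1) * (-1))))); auto.
  - intros t Ht. apply continuity_pt_opp. apply continuity_pt_minus. apply HFc.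
    apply continuity_pt_scal. apply (continuity_pt_comp (fun t => -t) (fun t => Rpower t (1-2*mu))).
    apply continuity_pt_opp, continuity_pt_id.
    apply (cont_of_deriv _ _ _ (derivable_pt_lim_power (-t) (1-2*mu) ltac:(lra))).
  - intros t Ht. apply derivable_pt_lim_opp. apply derivable_pt_lim_minus. apply HFd. lra.
    apply derivable_pt_lim_scal.
    apply (derivable_pt_lim_comp (fun t => -t) (fun t => Rpower t (1-2*mu))).
    apply derivable_pt_lim_opp, derivable_pt_lim_id.
    apply derivable_pt_lim_power. lra.
  - intros t Ht. replace (1 - 2*mu - 1) with (- (2*mu)) by ring.
    pose proof (Fd_bound3 mu nu g hinv kappa F M Hnu Hmu Hs Hg t) as HB.
    rewrite Rabs_left in HB by lra. specialize (HB ltac:(lra)).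
    replace (A * ((1 - 2 * mu) * Rpower (-t) (- (2 * mu)) * -1)) with (Kc mu nu M * Rpower (-t) (- (2 * mu))).
    lra. unfold A. field. lra. }
apply Rnot_lt_le. intros Hlt.
set (d := F x + (mu - nu) * PI - A * Rpower (-x) (1 - 2*mu)).
destruct (Hn d ltac:(unfold d; lra)) as [B HB].
set (y := Rmin x B - 1). specialize (HB y ltac:(unfold y; pose proof (Rmin_r x B); lra)).
specialize (Hdec y ltac:(unfold y; pose proof (Rmin_l x B); lra)).
pose proof (Rpower_pos (-y) (1 - 2*mu)).
pose proof (Rle_abs (F y - - ((mu - nu) * PI))) as HH.
assert (0 < A * Rpower (-y) (1 - 2 * mu)) by (apply Rmult_lt_0_compat; lra).
unfold d in *. lra.
Qed.

Definition cst1 mu nu := Kk mu nu * mu * (1 + 1 / (2 * mu - 1)).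

Lemma fF_eq mu nu F x : fF mu nu F x = F x - (mu - nu) * (atan x - PI / 2).
Proof. unfold fF. rewrite theta_eq. reflexivity. Qed.

Lemma A_le mu nu M : 1/2 < mu -> 0 < nu -> nu < mu ->
  Kc mu nu M / (2 * mu - 1) <= cst1 mu nu * exp (4 * M) /\ Kc mu nu M <= cst1 mu nu * exp (4 * M).
Proof.
intros. pose proof (Kk_pos mu nu H0 H1). pose proof (exp_pos (4*M)).
assert (0 < 1 / (2*mu-1)) by (apply Rdiv_lt_0_compat; lra).
assert (0 < Kk mu nu * mu * exp (4*M)) by (apply Rmult_lt_0_compat; [apply Rmult_lt_0_compat|]; lra).
unfold Kc, cst1. split.
- replace (Kk mu nu * mu * (1 + 1 / (2 * mu - 1)) * exp (4 * M)) with
    (Kk mu nu * mu * exp (4 * M) + Kk mu nu * mu * exp (4 * M) / (2*mu-1)) by (field; lra).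
  lra.
- replace (Kk mu nu * mu * (1 + 1 / (2 * mu - 1)) * exp (4 * M)) with
    (Kk mu nu * mu * exp (4 * M) + Kk mu nu * mu * exp (4 * M) * (1 / (2*mu-1))) by (field; lra).
  assert (0 < Kk mu nu * mu * exp (4 * M) * (1 / (2*mu-1))) by (apply Rmult_lt_0_compat; lra). lra.
Qed.

Lemma part1 mu nu : 1/2 < mu -> 0 < nu < 1/2 ->
  forall (g hinv : R -> R) (kappa : R) (F : R -> R) (Mg : R),
       setup mu nu g hinv kappa F ->
       (forall y, Rabs (g y) <= Mg) ->
       (forall x, 1 <= Rabs x ->
          Rabs (fF mu nu F x) <=
            cst1 mu nu * exp (4 * Mg) * Rpower (Rabs x) (1 - 2 * mu)
            + (mu - nu) / Rabs x) /\
       (forall x, Rabs (fF mu nu F x) <= 2 * (mu - nu) * PI) /\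
       (forall x, x <> 0 ->
          exists l, derivable_pt_lim (fF mu nu F) x l /\
            Rabs l <=
              cst1 mu nu * exp (4 * Mg) /
                (Rpower (Rabs x) (2 * nu) * Rpower (x ^ 2 + 1) (mu - nu))
              + (mu - nu) / (x ^ 2 + 1)).
Proof.
intros Hmu Hnu g hinv kappa F M Hs Hg.
assert (Hnu1 : 0 < nu < 1) by lra. assert (Hnm : nu < mu) by lra.
pose proof (F_range mu nu g hinv kappa F M ltac:(lra) Hnm Hs Hg) as Hr.
destruct (A_le mu nu M Hmu ltac:(lra) Hnm) as [HA1 HA2].
pose proof PI_RGT_0 as Hpi.
split; [|split].
- intros x Hx. rewrite fF_eq.
  destruct (Rle_or_lt 0 x) as [Hp|Hn].
  + assert (Ex : Rabs x = x) by (apply Rabs_pos_eq; lra). rewrite Ex in *.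
    pose proof (tail_pos mu nu g hinv kappa F M Hmu Hnu1 Hnm Hs Hg x Hx) as Ht.
    assert (E : atan x - PI / 2 = - atan (/ x)) by (rewrite atan_inv by lra; ring).
    rewrite E.
    pose proof (atan_pos (/ x) ltac:(apply Rinv_0_lt_compat; lra)).
    pose proof (atan_le_id (/ x) ltac:(apply Rlt_le, Rinv_0_lt_compat; lra)).
    pose proof (Rpower_pos x (1 - 2*mu)).
    assert (Kc mu nu M / (2 * mu - 1) * Rpower x (1 - 2 * mu) <= cst1 mu nu * exp (4 * M) * Rpower x (1 - 2 * mu))
      by (apply Rmult_le_compat_r; lra).
    specialize (Hr x).
    assert ((mu - nu) * atan (/ x) <= (mu - nu) / x) by (apply Rmult_le_compat_l; lra).
    assert (0 < (mu - nu) * atan (/ x)) by (apply Rmult_lt_0_compat; lra).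
    replace ((mu - nu) * - atan (/ x)) with (- ((mu - nu) * atan (/ x))) by ring.
    apply Rabs_le. lra.
  + assert (Ex : Rabs x = - x) by (apply Rabs_left; lra). rewrite Ex in *.
    pose proof (tail_neg mu nu g hinv kappa F M Hmu Hnu1 Hnm Hs Hg x ltac:(lra)) as Ht.
    assert (E : atan x + PI / 2 = atan (/ (- x))) by (rewrite atan_inv, atan_opp by lra; ring).
    assert (E2 : F x - (mu - nu) * (atan x - PI / 2) = (F x + (mu - nu) * PI) - (mu - nu) * (atan x + PI / 2)) by (field).
    rewrite E2.
    rewrite E.
    pose proof (atan_pos (/ - x) ltac:(apply Rinv_0_lt_compat; lra)).
    pose proof (atan_le_id (/ - x) ltac:(apply Rlt_le, Rinv_0_lt_compat; lra)).
    pose proof (Rpower_pos (-x) (1 - 2*mu)).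
    assert (Kc mu nu M / (2 * mu - 1) * Rpower (-x) (1 - 2 * mu) <= cst1 mu nu * exp (4 * M) * Rpower (-x) (1 - 2 * mu))
      by (apply Rmult_le_compat_r; lra).
    specialize (Hr x).
    assert ((mu - nu) * atan (/ - x) <= (mu - nu) / - x) by (apply Rmult_le_compat_l; lra).
    assert (0 < (mu - nu) * atan (/ - x)) by (apply Rmult_lt_0_compat; lra).
    apply Rabs_le. lra.
- intros x. rewrite fF_eq. specialize (Hr x). pose proof (atan_bound x).
  assert (0 <= (mu - nu) * (PI / 2 - atan x) <= (mu - nu) * PI).
  { split; [apply Rmult_le_pos | apply Rmult_le_compat_l]; lra. }
  replace ((mu - nu) * (atan x - PI / 2)) with (- ((mu - nu) * (PI / 2 - atan x))) by ring.
  apply Rabs_le. lra.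
- intros x Hx.
  destruct (Fd_bound2 mu nu g hinv kappa F M Hnu1 Hnm Hs Hg x Hx) as [H1 H2].
  exists (Fd mu nu g hinv kappa x - (mu - nu) * / (1 + x^2)). split.
  + apply is_derive_Reals.
    apply (is_derive_ext (fun t => F t - (mu - nu) * (atan t - PI / 2))).
    { intros t. rewrite <- fF_eq. reflexivity. }
    apply is_derive_Reals. apply derivable_pt_lim_minus.
    destruct Hs as (_&_&_&_&_&_&HFd&_). apply HFd; auto.
    apply derivable_pt_lim_scal. replace (/ (1 + x^2)) with (/ (1 + x^2) - 0) by ring.
    apply derivable_pt_lim_minus. apply derivable_pt_lim_atan. apply derivable_pt_lim_const.
  + pose proof (Den_pos mu nu x).
    assert (Kc mu nu M / Den mu nu x <= cst1 mu nu * exp (4 * M) / Den mu nu x).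
    { apply Rmult_le_compat_r. apply Rlt_le, Rinv_0_lt_compat; lra. lra. }
    fold (Den mu nu x).
    assert (0 < (mu - nu) * / (1 + x ^ 2)) by (apply Rmult_lt_0_compat; [lra| apply Rinv_0_lt_compat; nra]).
    replace ((mu - nu) / (x ^ 2 + 1)) with ((mu - nu) * / (1 + x ^ 2)) by (unfold Rdiv; f_equal; f_equal; ring).
    apply Rabs_le. lra.
Qed.

Lemma ex_RInt_cpt (h : R -> R) a b :
  (forall z, Rmin a b <= z <= Rmax a b -> continuity_pt h z) -> ex_RInt h a b.
Proof. intros H. apply (@ex_RInt_continuous R_CompleteNormedModule). intros z Hz. apply continuity_pt_filterlim. auto. Qed.

Definition Dh (f : R -> R) x t := (f (x - t) - f (x + t)) / t.

Lemma Dh_cont f x t : continuity f -> t <> 0 -> continuity_pt (Dh f x) t.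
Proof.
intros Hf Ht. unfold Dh. apply continuity_pt_div; auto.
- apply continuity_pt_minus.
  + apply (continuity_pt_comp (fun t => x - t) f). apply continuity_pt_minus.
    apply continuity_pt_const; intros a b; auto. apply continuity_pt_id. apply Hf.
  + apply (continuity_pt_comp (fun t => x + t) f). apply continuity_pt_plus.
    apply continuity_pt_const; intros a b; auto. apply continuity_pt_id. apply Hf.
- apply continuity_pt_id.
Qed.

Lemma Dh_ex f x a b : continuity f -> 0 < a -> 0 < b -> ex_RInt (Dh f x) a b.
Proof.
intros Hf Ha Hb. apply ex_RInt_cpt. intros z Hz. apply Dh_cont; auto.
assert (0 < Rmin a b) by (apply Rmin_glb_lt; lra). lra.
Qed.

Lemma pv_from_RInt f x e Rr : continuity f -> 0 < e < Rr ->
  pv_trunc f x e Rr (RInt (Dh f x) e Rr).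
Proof.
intros Hf He.
set (h := fun y => f y / (x - y)).
assert (Hc : forall y, y <> x -> continuity_pt h y).
{ intros y Hy. unfold h. apply continuity_pt_div. apply Hf.
  apply continuity_pt_minus. apply continuity_pt_const; intros a b; auto. apply continuity_pt_id. lra. }
assert (E1 : ex_RInt h (x - Rr) (x - e)).
{ apply ex_RInt_cpt. intros z Hz. rewrite Rmin_left in Hz by lra. rewrite Rmax_right in Hz by lra. apply Hc. lra. }
assert (E2 : ex_RInt h (x + e) (x + Rr)).
{ apply ex_RInt_cpt. intros z Hz. rewrite Rmin_left in Hz by lra. rewrite Rmax_right in Hz by lra. apply Hc. lra. }
exists (ex_RInt_Reals_0 _ _ _ E1), (ex_RInt_Reals_0 _ _ _ E2).
rewrite <- !RInt_Reals.
set (g1 := fun t => f (x - t) / t). set (g2 := fun t => - (f (x + t) / t)).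
assert (Eg1 : ex_RInt g1 e Rr).
{ apply ex_RInt_cpt. intros z Hz. rewrite Rmin_left in Hz by lra. rewrite Rmax_right in Hz by lra.
  unfold g1. apply continuity_pt_div. apply (continuity_pt_comp (fun t => x - t) f). apply continuity_pt_minus.
    apply continuity_pt_const; intros a b; auto. apply continuity_pt_id. apply Hf.
  apply continuity_pt_id. lra. }
assert (Eg2 : ex_RInt g2 e Rr).
{ apply ex_RInt_cpt. intros z Hz. rewrite Rmin_left in Hz by lra. rewrite Rmax_right in Hz by lra.
  unfold g2. apply continuity_pt_opp. apply continuity_pt_div. apply (continuity_pt_comp (fun t => x + t) f). apply continuity_pt_plus.
    apply continuity_pt_const; intros a b; auto. apply continuity_pt_id. apply Hf.
  apply continuity_pt_id. lra. }
assert (I1 : RInt h (x - Rr) (x - e) = RInt g1 e Rr).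
{ assert (C := RInt_comp_lin h (-1) x e Rr).
  replace (-1 * e + x) with (x - e) in C by ring. replace (-1 * Rr + x) with (x - Rr) in C by ring.
  specialize (C ltac:(apply ex_RInt_swap; exact E1)).
  rewrite <- (opp_RInt_swap h (x - e) (x - Rr)) by (apply ex_RInt_swap; exact E1).
  rewrite <- C.
  rewrite (RInt_ext _ (fun t => opp (g1 t))).
  2:{ intros t Ht. rewrite Rmin_left in Ht by lra. rewrite Rmax_right in Ht by lra.
    unfold h, g1, scal, opp; simpl. unfold mult; simpl. unfold opp; simpl.
    replace (-1 * t + x) with (x - t) by ring. field; repeat split; lra. }
  assert (Hop := RInt_opp g1 e Rr Eg1). simpl in Hop. unfold opp in *; simpl in *. unfold opp in *; simpl in *. rewrite Hop. ring. }
assert (I2 : RInt h (x + e) (x + Rr) = RInt g2 e Rr).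
{ assert (C := RInt_comp_lin h 1 x e Rr).
  replace (1 * e + x) with (x + e) in C by ring. replace (1 * Rr + x) with (x + Rr) in C by ring.
  specialize (C E2). rewrite <- C.
  apply RInt_ext. intros t Ht. rewrite Rmin_left in Ht by lra. rewrite Rmax_right in Ht by lra.
  unfold h, g2, scal; simpl. unfold mult; simpl.
  replace (1 * t + x) with (x + t) by ring. field; repeat split; lra. }
change (fun y => f y / (x - y)) with h. rewrite I1, I2.
assert (P := RInt_plus g1 g2 e Rr Eg1 Eg2). simpl in P. unfold plus in P; simpl in P.
rewrite <- P. apply RInt_ext. intros t Ht. rewrite Rmin_left in Ht by lra. rewrite Rmax_right in Ht by lra.
unfold g1, g2, Dh. simpl. field. lra.
Qed.

Lemma rp_anti a b g : 0 < a <= b -> 0 <= g -> Rpower b (-g) <= Rpower a (-g).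
Proof. intros. rewrite !Rpower_Ropp. apply Rinv_le_contravar. apply Rpower_pos. apply Rle_Rpower_l; lra. Qed.

Lemma rp_one y : Rpower 1 y = 1.
Proof. unfold Rpower. rewrite ln_1, Rmult_0_r, exp_0. reflexivity. Qed.

Lemma rp_le1 a g : 1 <= a -> 0 <= g -> Rpower a (-g) <= 1.
Proof. intros. rewrite <- (rp_one (-g)). apply rp_anti; lra. Qed.

Lemma rp_half a g : 0 < a -> 0 <= g <= 1 -> Rpower (a/2) (-g) <= 2 * Rpower a (-g).
Proof.
intros Ha Hg. unfold Rdiv. rewrite <- Rpower_mult_distr by lra.
rewrite Rmult_comm. apply Rmult_le_compat_r. apply Rlt_le, Rpower_pos.
unfold Rpower. rewrite ln_Rinv by lra. replace (- g * - ln 2) with (g * ln 2) by ring.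
fold (Rpower 2 g). apply Rle_trans with (Rpower 2 1). apply Rle_Rpower; lra. rewrite Rpower_1; lra.
Qed.

Lemma rp_sqrt X g : 0 < X -> Rpower (sqrt X) (-g) = Rpower X (-(g/2)).
Proof. intros. rewrite <- Rpower_sqrt by auto. rewrite Rpower_mult. f_equal. field. Qed.

Lemma ln_le_rp X g : 0 < X -> 0 < g -> ln X <= 2 / g * Rpower X (g/2).
Proof.
intros HX Hg. pose proof (exp_ineq1_le (ln (Rpower X (g/2)))) as H.
rewrite exp_ln in H by apply Rpower_pos. rewrite ln_Rpower in H.
apply Rmult_le_reg_l with (g/2). lra.
replace (g / 2 * (2 / g * Rpower X (g / 2))) with (Rpower X (g/2)) by (field; lra). lra.
Qed.

Lemma near_bound f x K : 0 <= K ->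
  (forall y, Rabs (y - x) <= 1 -> exists l, derivable_pt_lim f y l /\ Rabs l <= K) ->
  forall t, 0 < t <= 1 -> Rabs (Dh f x t) <= 2 * K.
Proof.
intros HK Hd t Ht.
assert (HD : forall y, Rabs (y - x) <= 1 -> is_derive f y (Derive f y) /\ Rabs (Derive f y) <= K).
{ intros y Hy. destruct (Hd y Hy) as [l [H1 H2]]. apply is_derive_Reals in H1.
  rewrite (is_derive_unique f y l H1). auto. }
destruct (MVT_gen f (x - t) (x + t) (Derive f)) as [c [Hc1 Hc2]].
- intros z Hz. rewrite Rmin_left in Hz by lra. rewrite Rmax_right in Hz by lra.
  apply HD. apply Rabs_le; lra.
- intros z Hz. rewrite Rmin_left in Hz by lra. rewrite Rmax_right in Hz by lra.
  destruct (HD z ltac:(apply Rabs_le; lra)) as [H1 _]. apply is_derive_Reals in H1.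
  apply (cont_of_deriv _ _ _ H1).
- rewrite Rmin_left in Hc1 by lra. rewrite Rmax_right in Hc1 by lra.
  destruct (HD c ltac:(apply Rabs_le; lra)) as [_ H2].
  unfold Dh. replace (f (x - t) - f (x + t)) with (- (Derive f c * (2 * t))) by lra.
  replace (- (Derive f c * (2 * t)) / t) with (- (2 * Derive f c)) by (field; lra).
  rewrite Rabs_Ropp, Rabs_mult, (Rabs_pos_eq 2) by lra. lra.
Qed.

Lemma near_int f x K : continuity f -> 0 <= K ->
  (forall y, Rabs (y - x) <= 1 -> exists l, derivable_pt_lim f y l /\ Rabs l <= K) ->
  forall a b, 0 < a <= b -> b <= 1 -> Rabs (RInt (Dh f x) a b) <= (b - a) * (2 * K).
Proof.
intros Hf HK Hd a b Hab Hb. apply abs_RInt_le_const. lra. apply Dh_ex; auto; lra.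
intros t Ht. apply (near_bound f x K HK Hd). lra.
Qed.

Definition mm X g t := (Rpower (1 + Rabs (X - t)) (-g) + Rpower (1 + X + t) (-g)) / t.

Lemma Dh_tail f x X g C : X = Rabs x -> 0 <= C ->
  (forall y, Rabs (f y) <= C * Rpower (1 + Rabs y) (-g)) ->
  forall t, 0 < t -> Rabs (Dh f x t) <= C * mm X g t.
Proof.
intros HX HC Hf t Ht. unfold Dh, mm.
assert (E : Rabs (f (x - t) - f (x + t)) <= C * (Rpower (1 + Rabs (X - t)) (-g) + Rpower (1 + X + t) (-g))).
{ eapply Rle_trans. apply Rabs_triang. rewrite Rabs_Ropp.
  pose proof (Hf (x - t)). pose proof (Hf (x + t)).
  destruct (Rle_or_lt 0 x).
  - rewrite Rabs_pos_eq in HX by lra. subst X.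
    rewrite (Rabs_pos_eq (x + t)) in * by lra. rewrite Rmult_plus_distr_l.
    replace (1 + x + t) with (1 + (x + t)) by ring. lra.
  - rewrite Rabs_left in HX by lra. subst X.
    rewrite (Rabs_left (x - t)) in * by lra. rewrite Rmult_plus_distr_l.
    replace (1 + - x + t) with (1 + - (x - t)) by ring.
    replace (Rabs (- x - t)) with (Rabs (x + t)) by (rewrite <- Rabs_Ropp; f_equal; ring). lra. }
unfold Rdiv. rewrite Rabs_mult, (Rabs_pos_eq (/ t)) by (apply Rlt_le, Rinv_0_lt_compat; lra).
rewrite <- Rmult_assoc. apply Rmult_le_compat_r. apply Rlt_le, Rinv_0_lt_compat; lra. exact E.
Qed.

Lemma int_maj (D m Mf : R -> R) a b : a <= b -> ex_RInt D a b ->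
  (forall t, a <= t <= b -> Rabs (D t) <= m t) ->
  (forall t, a <= t <= b -> is_derive Mf t (m t)) ->
  (forall t, a <= t <= b -> continuity_pt m t) ->
  Rabs (RInt D a b) <= Mf b - Mf a.
Proof.
intros Hab HD Hm Hd Hc.
assert (HI : is_RInt m a b (minus (Mf b) (Mf a))).
{ apply (@is_RInt_derive R_CompleteNormedModule); rewrite Rmin_left, Rmax_right by lra; auto.
  intros t Ht. apply continuity_pt_filterlim. auto. }
assert (Em : ex_RInt m a b) by (eexists; eauto).
assert (Im : RInt m a b = Mf b - Mf a) by (rewrite (@is_RInt_unique R_CompleteNormedModule m a b _ HI); reflexivity).
assert (Emo : ex_RInt (fun t => - m t) a b).
{ apply (ex_RInt_ext (fun t => opp (m t))). intros; reflexivity. apply (@ex_RInt_opp R_CompleteNormedModule). auto. }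
assert (Imo : RInt (fun t => - m t) a b = - RInt m a b).
{ assert (Hop := RInt_opp m a b Em). simpl in Hop. unfold opp in *; simpl in *. unfold opp in *; simpl in *. exact Hop. }
assert (H1 : RInt D a b <= RInt m a b).
{ apply RInt_le; auto. intros t Ht. pose proof (Hm t ltac:(lra)). pose proof (Rle_abs (D t)). lra. }
assert (H2 : RInt (fun t => - m t) a b <= RInt D a b).
{ apply RInt_le; auto. intros t Ht. pose proof (Hm t ltac:(lra)). pose proof (Rle_abs (- D t)). rewrite Rabs_Ropp in *. lra. }
apply Rabs_le. lra.
Qed.

Lemma sqrt_facts X : 4 <= X -> 2 <= sqrt X /\ sqrt X <= X / 2 /\ sqrt X * sqrt X = X.
Proof.
intros HX. assert (Hs : sqrt X * sqrt X = X) by (apply sqrt_sqrt; lra).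
assert (H2 : 2 <= sqrt X).
{ rewrite <- sqrt_4_2 || idtac. replace 2 with (sqrt 4). apply sqrt_le_1_alt. lra.
  replace 4 with (2 * 2) by ring. rewrite sqrt_square; lra. }
split; auto. split; auto. nra.
Qed.

Lemma mm_P1 X g t : 4 <= X -> 0 <= g <= 1 -> 1 <= t <= X / 2 ->
  mm X g t <= 4 * Rpower X (-g) / t.
Proof.
intros HX Hg Ht. unfold mm.
assert (A1 : Rpower (1 + Rabs (X - t)) (-g) <= 2 * Rpower X (-g)).
{ eapply Rle_trans. apply (rp_anti (X/2)). split. lra. rewrite Rabs_pos_eq; lra. lra. apply rp_half; lra. }
assert (A2 : Rpower (1 + X + t) (-g) <= 2 * Rpower X (-g)).
{ eapply Rle_trans. apply (rp_anti (X/2)). lra. lra. apply rp_half; lra. }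
unfold Rdiv. replace (4 * Rpower X (- g)) with (2 * Rpower X (-g) + 2 * Rpower X (-g)) by ring.
apply Rmult_le_compat_r. apply Rlt_le, Rinv_0_lt_compat; lra. lra.
Qed.

Lemma mm_P2 X g t : 4 <= X -> 0 <= g <= 1 -> X / 2 <= t -> sqrt X <= Rabs (X - t) ->
  mm X g t <= 4 * Rpower X (-(g/2)) / X.
Proof.
intros HX Hg Ht Hs. destruct (sqrt_facts X HX) as (S1&S2&S3). unfold mm.
assert (A1 : Rpower (1 + Rabs (X - t)) (-g) <= Rpower X (-(g/2))).
{ rewrite <- rp_sqrt by lra. apply rp_anti; lra. }
assert (A2 : Rpower (1 + X + t) (-g) <= Rpower X (-(g/2))).
{ rewrite <- rp_sqrt by lra. apply rp_anti; lra. }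
pose proof (Rpower_pos X (-(g/2))).
apply Rle_trans with (2 * Rpower X (-(g/2)) / t).
- unfold Rdiv. apply Rmult_le_compat_r. apply Rlt_le, Rinv_0_lt_compat; lra. lra.
- replace (4 * Rpower X (- (g / 2)) / X) with (2 * Rpower X (- (g / 2)) / (X / 2)) by (field; lra).
  unfold Rdiv. apply Rmult_le_compat_l. lra. apply Rinv_le_contravar; lra.
Qed.

Lemma mm_P3 X g t : 4 <= X -> 0 <= g <= 1 -> X / 2 <= t -> mm X g t <= 4 / X.
Proof.
intros HX Hg Ht. unfold mm.
assert (A1 : Rpower (1 + Rabs (X - t)) (-g) <= 1) by (apply rp_le1; [pose proof (Rabs_pos (X-t)); lra | lra]).
assert (A2 : Rpower (1 + X + t) (-g) <= 1) by (apply rp_le1; lra).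
apply Rle_trans with (2 / t).
- unfold Rdiv. apply Rmult_le_compat_r. apply Rlt_le, Rinv_0_lt_compat; lra. lra.
- replace (4 / X) with (2 / (X / 2)) by (field; lra).
  unfold Rdiv. apply Rmult_le_compat_l. lra. apply Rinv_le_contravar; lra.
Qed.

Lemma mm_P5 X g t : 4 <= X -> 0 <= g <= 1 -> 2 * X <= t -> mm X g t <= 4 * Rpower t (-g) / t.
Proof.
intros HX Hg Ht. unfold mm.
assert (A1 : Rpower (1 + Rabs (X - t)) (-g) <= 2 * Rpower t (-g)).
{ eapply Rle_trans. apply (rp_anti (t/2)). split. lra. rewrite Rabs_minus_sym, Rabs_pos_eq; lra. lra. apply rp_half; lra. }
assert (A2 : Rpower (1 + X + t) (-g) <= 2 * Rpower t (-g)).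
{ eapply Rle_trans. apply (rp_anti (t/2)). lra. lra. apply rp_half; lra. }
unfold Rdiv. replace (4 * Rpower t (- g)) with (2 * Rpower t (-g) + 2 * Rpower t (-g)) by ring.
apply Rmult_le_compat_r. apply Rlt_le, Rinv_0_lt_compat; lra. lra.
Qed.

Lemma chas f x a b c : continuity f -> 0 < a -> 0 < b -> 0 < c ->
  RInt (Dh f x) a c = RInt (Dh f x) a b + RInt (Dh f x) b c.
Proof.
intros Hf Ha Hb Hc. rewrite <- (RInt_Chasles (Dh f x) a b c); try apply Dh_ex; auto.
Qed.

Lemma abs5 a b c d e : Rabs (a + (b + (c + (d + e)))) <= Rabs a + Rabs b + Rabs c + Rabs d + Rabs e.
Proof.
pose proof (Rabs_triang a (b + (c + (d + e)))). pose proof (Rabs_triang b (c + (d + e))).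
pose proof (Rabs_triang c (d + e)). pose proof (Rabs_triang d e). lra.
Qed.

Section Tail.
Variables (f : R -> R) (x X g C : R).
Hypotheses (Hf : continuity f) (HX : X = Rabs x) (HX4 : 4 <= X) (Hg : 0 < g <= 1) (HC : 0 <= C)
  (Hb : forall y, Rabs (f y) <= C * Rpower (1 + Rabs y) (-g)).

Lemma I5 a b : 2 * X <= a <= b -> Rabs (RInt (Dh f x) a b) <= 4 * C / g * Rpower a (-g).
Proof.
intros Hab.
eapply Rle_trans.
- apply (int_maj (Dh f x) (fun t => C * (4 * Rpower t (-g) / t)) (fun t => - (4 * C / g) * Rpower t (-g))).
  lra. apply Dh_ex; auto; lra.
  + intros t Ht. eapply Rle_trans. apply (Dh_tail f x X g C); auto; lra.
    apply Rmult_le_compat_l. auto. apply mm_P5; lra.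
  + intros t Ht. unfold Rpower. auto_derive. lra. field. lra.
  + intros t Ht. apply continuity_pt_scal. unfold Rdiv. apply continuity_pt_mult.
    apply continuity_pt_scal. apply (cont_of_deriv _ _ _ (derivable_pt_lim_power t (-g) ltac:(lra))).
    apply continuity_pt_inv. apply continuity_pt_id. lra.
- pose proof (Rpower_pos b (-g)).
  assert (0 <= 4 * C / g) by (apply Rmult_le_pos; [lra | apply Rlt_le, Rinv_0_lt_compat; lra]).
  nra.
Qed.

Lemma I1 : Rabs (RInt (Dh f x) 1 (X/2)) <= 8 * C / g * Rpower X (-(g/2)).
Proof.
eapply Rle_trans.
- apply (int_maj (Dh f x) (fun t => C * (4 * Rpower X (-g) / t)) (fun t => C * 4 * Rpower X (-g) * ln t)).
  lra. apply Dh_ex; auto; lra.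
  + intros t Ht. eapply Rle_trans. apply (Dh_tail f x X g C); auto; lra.
    apply Rmult_le_compat_l. auto. apply mm_P1; lra.
  + intros t Ht. auto_derive. lra. field. lra.
  + intros t Ht. apply continuity_pt_scal. unfold Rdiv. apply continuity_pt_mult.
    apply continuity_pt_const; intros a b; auto.
    apply continuity_pt_inv. apply continuity_pt_id. lra.
- rewrite ln_1, Rmult_0_r, Rminus_0_r.
  assert (ln (X/2) <= ln X) by (apply ln_le; lra).
  pose proof (ln_le_rp X g ltac:(lra) ltac:(lra)).
  assert (0 <= ln (X/2)) by (rewrite <- ln_1; apply ln_le; lra).
  pose proof (Rpower_pos X (-g)).
  assert (E : Rpower X (-(g/2)) = Rpower X (-g) * Rpower X (g/2)) by (rewrite <- Rpower_plus; f_equal; field).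
  rewrite E.
  apply Rle_trans with (C * 4 * Rpower X (- g) * (2 / g * Rpower X (g / 2))).
  + apply Rmult_le_compat_l. apply Rmult_le_pos. lra. lra. lra.
  + right. field. lra.
Qed.

Lemma tail_sum Rr : 2 * X <= Rr -> Rabs (RInt (Dh f x) 1 Rr) <= C * (12 / g + 14) * Rpower X (-(g/2)).
Proof.
intros HR. destruct (sqrt_facts X HX4) as (S1&S2&S3).
set (S := Rpower X (-(g/2))).
assert (HS : 0 < S) by apply Rpower_pos.
rewrite (chas f x 1 (X/2) Rr), (chas f x (X/2) (X - sqrt X) Rr), (chas f x (X - sqrt X) (X + sqrt X) Rr),
  (chas f x (X + sqrt X) (2 * X) Rr); auto; try lra.
pose proof I1 as J1.
assert (J2 : Rabs (RInt (Dh f x) (X/2) (X - sqrt X)) <= 2 * C * S).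
{ eapply Rle_trans. apply abs_RInt_le_const. lra. apply Dh_ex; auto; lra.
  intros t Ht. eapply Rle_trans. apply (Dh_tail f x X g C); auto; lra.
  apply Rmult_le_compat_l. auto. apply (mm_P2 X g t); try lra. rewrite Rabs_pos_eq; lra.
  assert (0 <= C * (4 * S / X)) by (apply Rmult_le_pos; [lra|]; apply Rlt_le, Rdiv_lt_0_compat; lra).
  apply Rle_trans with ((X/2) * (C * (4 * S / X))). apply Rmult_le_compat_r; lra.
  right. fold S. field. lra. }
assert (J3 : Rabs (RInt (Dh f x) (X - sqrt X) (X + sqrt X)) <= 8 * C * S).
{ eapply Rle_trans. apply abs_RInt_le_const. lra. apply Dh_ex; auto; lra.
  intros t Ht. eapply Rle_trans. apply (Dh_tail f x X g C); auto; lra.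
  apply Rmult_le_compat_l. auto. apply (mm_P3 X g t); lra.
  replace ((X + sqrt X - (X - sqrt X)) * (C * (4 / X))) with (8 * C * / sqrt X).
  2:{ replace (4 / X) with (4 / (sqrt X * sqrt X)) by (rewrite S3; reflexivity). field. lra. }
  apply Rmult_le_compat_l. lra.
  assert (E : / sqrt X = Rpower X (-(1/2))).
  { rewrite <- (rp_sqrt X 1) by lra. rewrite Rpower_Ropp, Rpower_1. reflexivity. lra. }
  rewrite E. unfold S. apply Rle_Rpower; lra. }
assert (J4 : Rabs (RInt (Dh f x) (X + sqrt X) (2 * X)) <= 4 * C * S).
{ eapply Rle_trans. apply abs_RInt_le_const. lra. apply Dh_ex; auto; lra.
  intros t Ht. eapply Rle_trans. apply (Dh_tail f x X g C); auto; lra.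
  apply Rmult_le_compat_l. auto. apply (mm_P2 X g t); try lra. rewrite Rabs_minus_sym, Rabs_pos_eq; lra.
  assert (0 <= C * (4 * S / X)) by (apply Rmult_le_pos; [lra|]; apply Rlt_le, Rdiv_lt_0_compat; lra).
  apply Rle_trans with (X * (C * (4 * S / X))). apply Rmult_le_compat_r; lra.
  right. fold S. field. lra. }
assert (J5 : Rabs (RInt (Dh f x) (2 * X) Rr) <= 4 * C / g * S).
{ eapply Rle_trans. apply I5. lra.
  assert (0 <= 4 * C / g) by (apply Rmult_le_pos; [lra | apply Rlt_le, Rinv_0_lt_compat; lra]).
  apply Rmult_le_compat_l. auto. unfold S.
  apply Rle_trans with (Rpower X (-g)). apply rp_anti; lra. apply Rle_Rpower; lra. }
fold S in J1.
assert (E : C * (12 / g + 14) * S = 8 * C / g * S + 2 * C * S + 8 * C * S + 4 * C * S + 4 * C / g * S) by (field; lra).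
rewrite E.
eapply Rle_trans. apply abs5. lra.
Qed.

End Tail.

Lemma hilbert_gen f x X g C K :
  continuity f -> X = Rabs x -> 4 <= X -> 0 < g <= 1 -> 0 <= C -> 0 <= K ->
  (forall y, Rabs (f y) <= C * Rpower (1 + Rabs y) (-g)) ->
  (forall y, Rabs (y - x) <= 1 -> exists l, derivable_pt_lim f y l /\ Rabs l <= K) ->
  exists L, hilbert_at f x L /\ Rabs L <= (2 * K + C * (16 / g + 14) * Rpower X (-(g/2))) / PI.
Proof.
intros Hf HX HX4 Hg HC HK Hb Hd.
pose proof PI_RGT_0 as Hpi.
set (tau := fun a => 4 * C / g * Rpower a (-g)).
assert (HZ : 0 <= 4 * C / g) by (apply Rmult_le_pos; [lra | apply Rlt_le, Rinv_0_lt_compat; lra]).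
assert (Ht0 : forall eps, 0 < eps -> exists B, forall a, B <= a -> tau a < eps).
{ intros eps He. set (Z := 4 * C / g) in *. set (T := Z / (g * eps)).
  assert (HT : 0 <= T) by (unfold T; apply Rmult_le_pos; [lra | apply Rlt_le, Rinv_0_lt_compat; nra]).
  exists (Rmax 1 (exp T)). intros a Ha.
  assert (Ha1 : 1 <= a) by (pose proof (Rmax_l 1 (exp T)); lra).
  assert (Hla : T <= ln a).
  { rewrite <- (ln_exp T). apply ln_le. apply exp_pos. pose proof (Rmax_r 1 (exp T)); lra. }
  unfold tau. fold Z. unfold Rpower.
  pose proof (exp_ineq1_le (g * ln a)).
  replace (- g * ln a) with (- (g * ln a)) by ring. rewrite exp_Ropp.
  assert (1 + g * T <= exp (g * ln a)) by (apply Rle_trans with (1 + g * ln a); nra).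
  assert (0 < 1 + g * T) by nra.
  apply Rle_lt_trans with (Z / (1 + g * T)).
  - unfold Rdiv. apply Rmult_le_compat_l. lra. apply Rinv_le_contravar; lra.
  - apply Rmult_lt_reg_r with (1 + g * T). lra.
    replace (Z / (1 + g * T) * (1 + g * T)) with Z by (field; lra).
    replace (g * T) with (Z / eps) by (unfold T; field; lra).
    replace (eps * (1 + Z / eps)) with (eps + Z) by (field; lra). lra. }
destruct (lim_fun (fun a => RInt (Dh f x) 1 a) tau (2 * X)) as [L2 HL2].
{ intros a b Ha Hab.
  rewrite (chas f x 1 a b) by (auto; lra).
  replace (RInt (Dh f x) 1 a - (RInt (Dh f x) 1 a + RInt (Dh f x) a b)) with (- RInt (Dh f x) a b) by ring.
  rewrite Rabs_Ropp. apply (I5 f x X g C); auto; lra. }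
{ exact Ht0. }
destruct (lim_fun (fun s => RInt (Dh f x) (/ s) 1) (fun s => 2 * K / s) 1) as [L1 HL1].
{ intros a b Ha Hab.
  assert (0 < / b <= / a) by (split; [apply Rinv_0_lt_compat; lra | apply Rinv_le_contravar; lra]).
  assert (/ a <= 1) by (rewrite <- Rinv_1; apply Rinv_le_contravar; lra).
  rewrite (chas f x (/ b) (/ a) 1) by (auto; lra).
  replace (RInt (Dh f x) (/ a) 1 - (RInt (Dh f x) (/ b) (/ a) + RInt (Dh f x) (/ a) 1)) with (- RInt (Dh f x) (/ b) (/ a)) by ring.
  rewrite Rabs_Ropp. eapply Rle_trans. apply (near_int f x K); auto; lra.
  assert (0 < / b) by lra.
  replace (2 * K / a) with (/ a * (2 * K)) by (unfold Rdiv; ring). apply Rmult_le_compat_r; lra. }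
{ intros eps He. exists (2 * K / eps + 1). intros a Ha.
  assert (0 < a) by (assert (0 <= 2 * K / eps) by (apply Rmult_le_pos; [lra|apply Rlt_le, Rinv_0_lt_compat; lra]); lra).
  apply Rmult_lt_reg_r with a. lra. replace (2 * K / a * a) with (2 * K) by (field; lra).
  assert (2 * K / eps < a) by lra.
  apply Rmult_lt_compat_r with (r := eps) in H0; auto. replace (2 * K / eps * eps) with (2 * K) in H0 by (field; lra). lra. }
set (S := Rpower X (-(g/2))).
assert (HL1b : Rabs L1 <= 2 * K).
{ specialize (HL1 1 ltac:(lra)). simpl in HL1. rewrite Rinv_1, RInt_point in HL1.
  unfold zero in HL1; simpl in HL1. rewrite Rminus_0_l, Rabs_Ropp in HL1. lra. }
assert (HL2b : Rabs L2 <= C * (16 / g + 14) * S).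
{ specialize (HL2 (2 * X) ltac:(lra)). simpl in HL2.
  pose proof (tail_sum f x X g C Hf HX HX4 Hg HC Hb (2 * X) ltac:(lra)) as HT. fold S in HT.
  assert (tau (2 * X) <= 4 * C / g * S).
  { unfold tau, S. apply Rmult_le_compat_l. auto.
    apply Rle_trans with (Rpower X (-g)). apply rp_anti; lra. apply Rle_Rpower; lra. }
  replace L2 with (RInt (Dh f x) 1 (2 * X) - (RInt (Dh f x) 1 (2 * X) - L2)) by ring.
  eapply Rle_trans. apply Rabs_triang. rewrite Rabs_Ropp.
  replace (C * (16 / g + 14) * S) with (C * (12 / g + 14) * S + 4 * C / g * S) by (field; lra). lra. }
exists ((L1 + L2) / PI). split.
- intros eps He.
  destruct (Ht0 (eps * PI / 2) ltac:(nra)) as [B0 HB0].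
  exists (Rmin 1 (eps * PI / (4 * K + 4))), (Rmax (2 * X) B0). split.
  { apply Rmin_glb_lt. lra. apply Rdiv_lt_0_compat; nra. }
  intros e Rr He1 HR.
  assert (He2 : e < 1) by (pose proof (Rmin_l 1 (eps * PI / (4 * K + 4))); lra).
  assert (He3 : e < eps * PI / (4 * K + 4)) by (pose proof (Rmin_r 1 (eps * PI / (4 * K + 4))); lra).
  assert (HR2 : 2 * X < Rr) by (pose proof (Rmax_l (2 * X) B0); lra).
  assert (HR3 : B0 <= Rr) by (pose proof (Rmax_r (2 * X) B0); lra).
  exists (RInt (Dh f x) e Rr). split.
  { apply pv_from_RInt; auto; lra. }
  specialize (HL1 (/ e) ltac:(rewrite <- Rinv_1; apply Rinv_le_contravar; lra)).
  simpl in HL1. rewrite Rinv_inv in HL1.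
  specialize (HL2 Rr ltac:(lra)). simpl in HL2.
  specialize (HB0 Rr HR3).
  rewrite (chas f x e 1 Rr) by (auto; lra).
  assert (Hk : 2 * K / / e < eps * PI / 2).
  { unfold Rdiv at 1. rewrite Rinv_inv.
    apply Rle_lt_trans with (2 * K * (eps * PI / (4 * K + 4))).
    apply Rmult_le_compat_l; lra.
    replace (2 * K * (eps * PI / (4 * K + 4))) with (eps * PI / 2 * (2 * K / (2 * K + 2))) by (field; lra).
    assert (2 * K / (2 * K + 2) < 1).
    { unfold Rdiv. apply Rmult_lt_reg_r with (2*K+2). lra. rewrite Rmult_assoc, Rinv_l, Rmult_1_r by lra. lra. }
    assert (0 < eps * PI / 2) by nra. nra. }
  replace ((RInt (Dh f x) e 1 + RInt (Dh f x) 1 Rr) / PI - (L1 + L2) / PI) with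
    (((RInt (Dh f x) e 1 - L1) + (RInt (Dh f x) 1 Rr - L2)) / PI) by (field; lra).
  unfold Rdiv. rewrite Rabs_mult, (Rabs_pos_eq (/ PI)) by (apply Rlt_le, Rinv_0_lt_compat; lra).
  apply Rmult_lt_reg_r with PI. lra. rewrite Rmult_assoc, Rinv_l, Rmult_1_r by lra.
  eapply Rle_lt_trans. apply Rabs_triang. unfold tau in *. lra.
- unfold Rdiv. rewrite Rabs_mult, (Rabs_pos_eq (/ PI)) by (apply Rlt_le, Rinv_0_lt_compat; lra).
  apply Rmult_le_compat_r. apply Rlt_le, Rinv_0_lt_compat; lra.
  eapply Rle_trans. apply Rabs_triang. fold S. lra.
Qed.

Lemma fF_cont mu nu F : continuity F -> continuity (fF mu nu F).
Proof.
intros HF. replace (fF mu nu F) with (fun z => F z - (mu - nu) * (atan z - PI / 2)).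
2:{ apply functional_extensionality. intros z. rewrite fF_eq. reflexivity. }
intros z. apply continuity_pt_minus. apply HF. apply continuity_pt_scal.
apply continuity_pt_minus. apply (cont_of_deriv _ _ _ (derivable_pt_lim_atan z)).
apply continuity_pt_const. intros a b; auto.
Qed.

Lemma part2 mu nu : 1 / 2 < mu -> 0 < nu < 1 / 2 ->
  forall M : R, exists c : R,
     forall (g hinv : R -> R) (kappa : R) (F : R -> R),
       setup mu nu g hinv kappa F ->
       (forall y, Rabs (g y) <= M) ->
       forall x, 4 <= Rabs x ->
         exists Tx, hilbert_at (fF mu nu F) x Tx /\
           Rabs Tx <= c * (Rpower (Rabs x) (1 / 2 - mu) + Rpower (Rabs x) (- (1 / 2))).
Proof.
intros Hmu Hnu M.
set (gam := Rmin (2 * mu - 1) 1).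
assert (Hgam : 0 < gam <= 1) by (unfold gam; split; [apply Rmin_glb_lt; lra | apply Rmin_r]).
assert (Hgam2 : gam <= 2 * mu - 1) by (unfold gam; apply Rmin_l).
set (K0 := cst1 mu nu * exp (4 * M) + (mu - nu)).
set (Cb := 2 * K0 + 4 * (mu - nu) * PI).
pose proof PI_RGT_0 as Hpi.
assert (Hc1 : 0 < cst1 mu nu).
{ unfold cst1. pose proof (Kk_pos mu nu ltac:(lra) ltac:(lra)).
  assert (0 < 1 / (2 * mu - 1)) by (apply Rdiv_lt_0_compat; lra).
  apply Rmult_lt_0_compat; [apply Rmult_lt_0_compat|]; lra. }
assert (HK0 : 0 < K0) by (unfold K0; pose proof (exp_pos (4*M)); nra).
assert (HC : 0 <= Cb) by (unfold Cb; nra).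
exists ((3 * K0 + Cb * (16 / gam + 14)) / PI).
intros g hinv kappa F Hs Hg x Hx.
destruct (part1 mu nu Hmu Hnu g hinv kappa F M Hs Hg) as (P1 & P2 & P3).
set (X := Rabs x) in *.
set (K := K0 / (X - 1)).
assert (HK : 0 <= K) by (unfold K; apply Rlt_le, Rdiv_lt_0_compat; lra).
assert (Hb : forall y, Rabs (fF mu nu F y) <= Cb * Rpower (1 + Rabs y) (-gam)).
{ intros y. destruct (Rle_or_lt 1 (Rabs y)) as [Hy|Hy].
  - eapply Rle_trans. apply P1. auto.
    assert (E1 : Rpower (Rabs y) (1 - 2 * mu) <= Rpower (Rabs y) (-gam)) by (apply Rle_Rpower; lra).
    assert (E2 : (mu - nu) / Rabs y <= (mu - nu) * Rpower (Rabs y) (-gam)).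
    { unfold Rdiv. apply Rmult_le_compat_l. lra.
      replace (/ Rabs y) with (Rpower (Rabs y) (Ropp 1)). apply Rle_Rpower; lra.
      rewrite Rpower_Ropp, Rpower_1; auto; lra. }
    assert (E3 : Rpower (Rabs y) (-gam) <= 2 * Rpower (1 + Rabs y) (-gam)).
    { eapply Rle_trans. apply (rp_anti ((1 + Rabs y) / 2)). lra. lra. apply rp_half; lra. }
    pose proof (exp_pos (4 * M)).
    assert (cst1 mu nu * exp (4 * M) * Rpower (Rabs y) (1 - 2 * mu) <= cst1 mu nu * exp (4 * M) * Rpower (Rabs y) (-gam)).
    { apply Rmult_le_compat_l. nra. auto. }
    assert (K0 * Rpower (Rabs y) (-gam) <= K0 * (2 * Rpower (1 + Rabs y) (-gam))) by (apply Rmult_le_compat_l; lra).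
    pose proof (Rpower_pos (1 + Rabs y) (-gam)).
    assert (0 <= 4 * (mu - nu) * PI * Rpower (1 + Rabs y) (-gam)) by (apply Rmult_le_pos; nra).
    unfold Cb, K0 in *. nra.
  - eapply Rle_trans. apply P2.
    assert (Rpower 2 (-gam) <= Rpower (1 + Rabs y) (-gam)) by (apply rp_anti; [pose proof (Rabs_pos y); lra | lra]).
    assert (/ 2 <= Rpower 2 (-gam)).
    { rewrite Rpower_Ropp. apply Rinv_le_contravar. apply Rpower_pos.
      apply Rle_trans with (Rpower 2 1). apply Rle_Rpower; lra. rewrite Rpower_1; lra. }
    assert (0 <= 2 * K0 * Rpower (1 + Rabs y) (-gam)) by (pose proof (Rpower_pos (1 + Rabs y) (-gam)); nra).
    assert (2 * (mu - nu) * PI <= 4 * (mu - nu) * PI * Rpower (1 + Rabs y) (-gam)).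
    { replace (2 * (mu - nu) * PI) with (4 * (mu - nu) * PI * / 2) by field.
      apply Rmult_le_compat_l. nra. lra. }
    unfold Cb. nra. }
assert (Hd : forall y, Rabs (y - x) <= 1 -> exists l, derivable_pt_lim (fF mu nu F) y l /\ Rabs l <= K).
{ intros y Hy.
  assert (Hy3 : X - 1 <= Rabs y).
  { unfold X. pose proof (Rabs_triang_inv x (x - y)). replace (x - (x - y)) with y in H by ring.
    rewrite Rabs_minus_sym in Hy. lra. }
  assert (Hy0 : y <> 0) by (intro; subst; rewrite Rabs_R0 in Hy3; lra).
  destruct (P3 y Hy0) as [l [Hl1 Hl2]]. exists l. split; auto.
  eapply Rle_trans. apply Hl2. fold (Den mu nu y).
  assert (Hyy : Rabs y <= Den mu nu y).
  { eapply Rle_trans. 2: apply Den_ge; lra.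
    rewrite <- (Rpower_1 (Rabs y)) at 1 by lra. apply Rle_Rpower; lra. }
  assert (Hy2 : Rabs y <= y^2 + 1) by (rewrite <- pow2_abs; nra).
  assert (0 < Den mu nu y) by apply Den_pos.
  pose proof (exp_pos (4*M)).
  assert (cst1 mu nu * exp (4 * M) / Den mu nu y <= cst1 mu nu * exp (4 * M) / Rabs y).
  { unfold Rdiv. apply Rmult_le_compat_l. nra. apply Rinv_le_contravar; lra. }
  assert ((mu - nu) / (y ^ 2 + 1) <= (mu - nu) / Rabs y).
  { unfold Rdiv. apply Rmult_le_compat_l. lra. apply Rinv_le_contravar; lra. }
  assert (K0 / Rabs y <= K).
  { unfold K, Rdiv. apply Rmult_le_compat_l. lra. apply Rinv_le_contravar; lra. }
  unfold K0 in *. unfold Rdiv in *. lra. }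
destruct (hilbert_gen (fF mu nu F) x X gam Cb K) as [L [HL1 HL2]]; auto.
{ destruct Hs as (_&_&_&_&_&HFc&_). apply fF_cont; auto. }
exists L. split; auto.
set (S := Rpower X (-(gam/2))) in *.
assert (HS : S <= Rpower X (1 / 2 - mu) + Rpower X (-(1/2))).
{ pose proof (Rpower_pos X (1/2 - mu)). pose proof (Rpower_pos X (-(1/2))).
  unfold S, gam. destruct (Rle_or_lt (2 * mu - 1) 1).
  - rewrite Rmin_left by lra. replace (- ((2 * mu - 1) / 2)) with (1/2 - mu) by field. lra.
  - rewrite Rmin_right by lra. lra. }
assert (H2K : 2 * K <= 3 * K0 * S).
{ unfold K. apply Rle_trans with (3 * K0 * / X).
  - unfold Rdiv. replace (2 * (K0 * / (X - 1))) with (K0 * (2 / (X - 1))) by (field; lra).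
    replace (3 * K0 * / X) with (K0 * (3 / X)) by (field; lra).
    apply Rmult_le_compat_l. lra.
    apply Rmult_le_reg_r with (X * (X - 1)). nra.
    replace (2 / (X - 1) * (X * (X - 1))) with (2 * X) by (field; lra).
    replace (3 / X * (X * (X - 1))) with (3 * (X - 1)) by (field; lra). lra.
  - apply Rmult_le_compat_l. lra. unfold S.
    replace (/ X) with (Rpower X (Ropp 1)) by (rewrite Rpower_Ropp, Rpower_1; auto; lra).
    apply Rle_Rpower; lra. }
eapply Rle_trans. apply HL2.
assert (HB0 : 0 <= Cb * (16 / gam + 14)).
{ apply Rmult_le_pos. auto. assert (0 < 16 / gam) by (apply Rdiv_lt_0_compat; lra). lra. }
set (B := Cb * (16 / gam + 14)) in *.
assert (HpiI : 0 < / PI) by (apply Rinv_0_lt_compat; lra).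
apply Rle_trans with ((3 * K0 + B) / PI * S).
- replace ((3 * K0 + B) / PI * S) with ((3 * K0 * S + B * S) * / PI) by (field; lra).
  unfold Rdiv. apply Rmult_le_compat_r. lra. lra.
- apply Rmult_le_compat_l. unfold Rdiv. apply Rmult_le_pos; lra. auto.
Qed.

Theorem lemma5p4 :
  forall mu nu : R, 1 / 2 < mu -> 0 < nu < 1 / 2 ->
  (* (1): c = c(mu,nu); Mg is any bound for ||g||_inf (e.g. ||g||_inf itself) *)
  (exists c : R,
     forall (g hinv : R -> R) (kappa : R) (F : R -> R) (Mg : R),
       setup mu nu g hinv kappa F ->
       (forall y, Rabs (g y) <= Mg) ->
       (forall x, 1 <= Rabs x ->
          Rabs (fF mu nu F x) <=
            c * exp (4 * Mg) * Rpower (Rabs x) (1 - 2 * mu)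
            + (mu - nu) / Rabs x) /\
       (forall x, Rabs (fF mu nu F x) <= 2 * (mu - nu) * PI) /\
       (forall x, x <> 0 ->
          exists l, derivable_pt_lim (fF mu nu F) x l /\
            Rabs l <=
              c * exp (4 * Mg) /
                (Rpower (Rabs x) (2 * nu) * Rpower (x ^ 2 + 1) (mu - nu))
              + (mu - nu) / (x ^ 2 + 1))) /\
  (* (2): c = c(mu,nu,M) *)
  (forall M : R, exists c : R,
     forall (g hinv : R -> R) (kappa : R) (F : R -> R),
       setup mu nu g hinv kappa F ->
       (forall y, Rabs (g y) <= M) ->
       forall x, 4 <= Rabs x ->
         exists Tx, hilbert_at (fF mu nu F) x Tx /\
           Rabs Tx <= c * (Rpower (Rabs x) (1 / 2 - mu) + Rpower (Rabs x) (- (1 / 2)))).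
Proof.
intros mu nu Hmu Hnu. split.
- exists (cst1 mu nu). intros g hinv kappa F Mg Hs Hg. apply (part1 mu nu Hmu Hnu g hinv kappa F Mg Hs Hg).
- apply part2; auto.
Qed.
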